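(* Let $u_l<u_r$ and let $v_l,v_r,w_l,w_r,z_l,z_r\in\mathbb{R}$. For $0<\epsilon<1$ define on $\mathbb{R}\times(0,\infty)$ the piecewise smooth function $U^\epsilon=(u_\epsilon,v_\epsilon,w_\epsilon,z_\epsilon)$ by $$U^\epsilon(x,t)=\begin{cases}(u_l,v_l,w_l,z_l), & x<(u_l-\epsilon)t,\\ \big(u_l,0,\frac{v_l^2}{2\epsilon},\frac{v_lw_l}{\epsilon}\big), & (u_l-\epsilon)t<x<u_lt,\\ \big(\frac{x}{t},0,0,0\big), & u_lt<x<u_rt,\\ \big(u_r,0,-\frac{v_r^2}{2\epsilon},-\frac{v_rw_r}{\epsilon}\big), & u_rt<x<(u_r+\epsilon)t,\\ (u_r,v_r,w_r,z_r), & x>(u_r+\epsilon)t.\end{cases}$$ Then, as $\epsilon\to0$, each of $\partial_tu_\epsilon+\partial_x(u_\epsilon^2/2)$, $\partial_tv_\epsilon+\partial_x(u_\epsilon v_\epsilon)$, $\partial_tw_\epsilon+\partial_x(v_\epsilon^2/2+u_\epsilon w_\epsilon)$, $\partial_tz_\epsilon+\partial_x(v_\epsilon w_\epsilon+u_\epsilon z_\epsilon)$ tends to $0$ in $\mathcal{D}'(\mathbb{R}\times(0,\infty))$, and $U^\epsilon\to(u,v,w,z)$ in $\mathcal{D}'(\mathbb{R}\times(0,\infty))$, where $u=u_l$ for $x<u_lt$, $u=x/t$ for $u_lt<x<u_rt$, $u=u_r$ for $x>u_rt$; $v=v_l$ for $x<u_lt$, $v=0$ for $u_lt<x<u_rt$,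 $v=v_r$ for $x>u_rt$; and $$w=w_lH(u_lt-x)+w_rH(x-u_rt)+\tfrac{v_l^2}{2}t\,\delta_{x=u_lt}-\tfrac{v_r^2}{2}t\,\delta_{x=u_rt},$$ $$z=z_lH(u_lt-x)+z_rH(x-u_rt)+v_lw_l t\,\delta_{x=u_lt}-v_rw_r t\,\delta_{x=u_rt}.$$ Thus $(u,v,w,z)$ is a shadow wave solution of the system $u_t+(u^2/2)_x=0$, $v_t+(uv)_x=0$, $w_t+(v^2/2+uw)_x=0$, $z_t+(vw+uz)_x=0$ with Riemann data $(u_l,v_l,w_l,z_l)$ for $x<0$, $(u_r,v_r,w_r,z_r)$ for $x>0$. Moreover it is entropy admissible: for every pair $\eta(u,v,w,z)=\bar\eta(u)+c_1v+c_2w+c_3z$, $q(u,v,w,z)=\bar q(u)+c_1uv+c_2(\frac{v^2}{2}+uw)+c_3(vw+uz)$ with $\bar\eta$ smooth convex, $\bar q'(u)=u\bar\eta'(u)$ and $c_1,c_2,c_3\in\mathbb{R}$, one has $\liminf_{\epsilon\to0}\int_0^\infty\!\int_{\mathbb{R}}\big(\eta(U^\epsilon)\phi_t+q(U^\epsilon)\phi_x\big)\,dx\,dt\ge0$ for every nonnegative $\phi\in C_c^\infty(\mathbb{R}\times(0,\infty))$. *)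

(* Defs.v *)
From Stdlib Require Import Reals.
Open Scope R_scope.

Definition continuous2 (f : R -> R -> R) : Prop :=
  forall x t eps, 0 < eps -> exists d, 0 < d /\
    forall y s, Rabs (y - x) < d -> Rabs (s - t) < d ->
      Rabs (f y s - f x t) < eps.

Definition is_dx (f fx : R -> R -> R) : Prop :=
  forall x t, derivable_pt_lim (fun y => f y t) x (fx x t).
Definition is_dt (f ft : R -> R -> R) : Prop :=
  forall x t, derivable_pt_lim (fun s => f x s) t (ft x t).

CoInductive smooth2 (f : R -> R -> R) : Prop :=
  | smooth2_intro : forall fx ft : R -> R -> R,
      continuous2 f -> is_dx f fx -> is_dt f ft ->
      smooth2 fx -> smooth2 ft -> smooth2 f.

CoInductive smooth1 (f : R -> R) : Prop :=
  | smooth1_intro : forall f' : R -> R,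
      (forall x, derivable_pt_lim f x (f' x)) -> smooth1 f' -> smooth1 f.

Definition convex (f : R -> R) : Prop :=
  forall x y l, 0 <= l <= 1 ->
    f (l * x + (1 - l) * y) <= l * f x + (1 - l) * f y.

Definition test_fun (phi : R -> R -> R) : Prop :=
  smooth2 phi /\
  exists a b T1 T2, 0 < T1 /\
    forall x t, (x < a \/ b < x \/ t < T1 \/ T2 < t) -> phi x t = 0.

Definition int_ab (f : R -> R) (a b I : R) : Prop :=
  exists pr : Riemann_integrable f a b, RiemannInt pr = I.

Definition int_pos (g : R -> R) (I : R) : Prop :=
  exists T1 T2, 0 < T1 /\ T1 < T2 /\
    (forall t, 0 < t -> (t < T1 \/ T2 < t) -> g t = 0) /\
    int_ab g T1 T2 I.

Definition dbl_int (F : R -> R -> R) (I : R) : Prop :=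
  exists a b T1 T2, a < b /\ 0 < T1 /\ T1 < T2 /\
    (forall x t, 0 < t -> (x < a \/ b < x \/ t < T1 \/ T2 < t) -> F x t = 0) /\
    exists g : R -> R,
      (forall t, T1 <= t <= T2 -> int_ab (fun x => F x t) a b (g t)) /\
      int_ab g T1 T2 I.

Definition tends (I : R -> R) (L : R) : Prop :=
  forall eta, 0 < eta -> exists d, 0 < d /\
    forall e, 0 < e -> e < d -> e < 1 -> Rabs (I e - L) < eta.

Definition liminf_nonneg (I : R -> R) : Prop :=
  forall eta, 0 < eta -> exists d, 0 < d /\
    forall e, 0 < e -> e < d -> e < 1 -> - eta < I e.

(* d_t c_e + d_x f_e -> 0 in D'(R x (0,oo)):
   int int (c_e phi_t + f_e phi_x) dx dt -> 0 for every test phi *)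
Definition residual_to0 (c f : R -> R -> R -> R) : Prop :=
  forall phi phix phit, test_fun phi -> is_dx phi phix -> is_dt phi phit ->
    exists I : R -> R,
      (forall e, 0 < e < 1 ->
         dbl_int (fun x t => c e x t * phit x t + f e x t * phix x t) (I e)) /\
      tends I 0.

(* c_e -> T in D'(R x (0,oo)), where Tpair phi L means <T, phi> = L *)
Definition dconv (c : R -> R -> R -> R) (Tpair : (R -> R -> R) -> R -> Prop)
  : Prop :=
  forall phi, test_fun phi ->
    exists (I : R -> R) (L : R),
      (forall e, 0 < e < 1 -> dbl_int (fun x t => c e x t * phi x t) (I e)) /\
      Tpair phi L /\ tends I L.

Definition fun_pair (g : R -> R -> R) (phi : R -> R -> R) (L : R) : Prop :=
  dbl_int (fun x t => g x t * phi x t) L.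

(* pairing with  g + a t delta_{x = cl t} + b t delta_{x = cr t},
   where <t delta_{x=ct}, phi> = int_0^oo t phi(ct,t) dt *)
Definition fun_delta_pair (g : R -> R -> R) (a cl b cr : R)
  (phi : R -> R -> R) (L : R) : Prop :=
  exists A B C,
    dbl_int (fun x t => g x t * phi x t) A /\
    int_pos (fun t => t * phi (cl * t) t) B /\
    int_pos (fun t => t * phi (cr * t) t) C /\
    L = A + a * B + b * C.

Definition Heav (x : R) : R := if Rlt_dec 0 x then 1 else 0.

(* selects the value in the five regions
   x < (ul-e)t, (ul-e)t <= x < ul t, ul t <= x < ur t,
   ur t <= x < (ur+e) t, x >= (ur+e) t
   (values on the separating lines are immaterial) *)
Definition pw5 (ul ur e x t : R) (A B C D E : R) : R :=
  if Rlt_dec x ((ul - e) * t) then A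
  else if Rlt_dec x (ul * t) then B
  else if Rlt_dec x (ur * t) then C
  else if Rlt_dec x ((ur + e) * t) then D
  else E.

Definition u_eps (ul ur : R) (e x t : R) : R :=
  pw5 ul ur e x t ul ul (x / t) ur ur.
Definition v_eps (ul ur vl vr : R) (e x t : R) : R :=
  pw5 ul ur e x t vl 0 0 0 vr.
Definition w_eps (ul ur vl vr wl wr : R) (e x t : R) : R :=
  pw5 ul ur e x t wl (vl ^ 2 / (2 * e)) 0 (- (vr ^ 2 / (2 * e))) wr.
Definition z_eps (ul ur vl vr wl wr zl zr : R) (e x t : R) : R :=
  pw5 ul ur e x t zl (vl * wl / e) 0 (- (vr * wr / e)) zr.

Definition u_lim (ul ur x t : R) : R :=
  if Rlt_dec x (ul * t) then ul else if Rlt_dec x (ur * t) then x / t else ur.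
Definition v_lim (ul ur vl vr x t : R) : R :=
  if Rlt_dec x (ul * t) then vl else if Rlt_dec x (ur * t) then 0 else vr.
Definition w_reg (ul ur wl wr x t : R) : R :=
  wl * Heav (ul * t - x) + wr * Heav (x - ur * t).
Definition z_reg (ul ur zl zr x t : R) : R :=
  zl * Heav (ul * t - x) + zr * Heav (x - ur * t).

(* Main.v *)
Require Import Defs.
From Stdlib Require Import Reals Lra FunctionalExtensionality.
From Coquelicot Require Import Coquelicot.
Open Scope R_scope.

Definition C2 (f : R -> R -> R) : Prop := forall x y, continuity_2d_pt f x y.

Lemma C2_of_cont2 f : continuous2 f -> C2 f.
Proof.
  intros H x y eps. destruct (H x y eps (cond_pos eps)) as [d [Hd Hd']].
  exists (mkposreal d Hd). intros u v Hu Hv. apply Hd'; assumption.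
Qed.

Lemma C2_swap f : C2 f -> C2 (fun u v => f v u).
Proof.
  intros H x y eps. destruct (H y x eps) as [d Hd].
  exists d. intros u v Hu Hv. apply Hd; assumption.
Qed.

Lemma C2_plus f g : C2 f -> C2 g -> C2 (fun u v => f u v + g u v).
Proof. intros Hf Hg x y. apply continuity_2d_pt_plus; auto. Qed.
Lemma C2_mult f g : C2 f -> C2 g -> C2 (fun u v => f u v * g u v).
Proof. intros Hf Hg x y. apply continuity_2d_pt_mult; auto. Qed.
Lemma C2_const c : C2 (fun _ _ => c).
Proof. intros x y. apply continuity_2d_pt_const. Qed.
Lemma C2_id1 : C2 (fun u _ => u).
Proof. intros x y. apply continuity_2d_pt_id1. Qed.
Lemma C2_id2 : C2 (fun _ v => v).
Proof. intros x y. apply continuity_2d_pt_id2. Qed.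
Lemma C2_comp1 (g : R -> R) (f : R -> R -> R) :
  (forall z, continuity_pt g z) -> C2 f -> C2 (fun u v => g (f u v)).
Proof. intros Hg Hf x y. apply continuity_1d_2d_pt_comp; auto. Qed.

Lemma C2_lin f : C2 f -> C2 (fun u v => f (u * v) v).
Proof.
  intros H x y eps. destruct (H (x*y) y eps) as [d1 Hd1].
  assert (Hp : 0 < Rmin 1 (d1 / (Rabs x + Rabs y + 2))).
  { apply Rmin_pos. lra. apply Rdiv_lt_0_compat. apply cond_pos.
    pose proof (Rabs_pos x); pose proof (Rabs_pos y); lra. }
  exists (mkposreal _ Hp). simpl. intros u v Hu Hv.
  pose proof (Rmin_l 1 (d1 / (Rabs x + Rabs y + 2))).
  pose proof (Rmin_r 1 (d1 / (Rabs x + Rabs y + 2))).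
  set (m := Rmin 1 (d1 / (Rabs x + Rabs y + 2))) in *.
  pose proof (Rabs_pos x); pose proof (Rabs_pos y).
  assert (0 < m) by (unfold m; exact Hp).
  assert (Hm : m * (Rabs x + Rabs y + 2) <= d1).
  { apply Rle_trans with (d1 / (Rabs x + Rabs y + 2) * (Rabs x + Rabs y + 2)).
    apply Rmult_le_compat_r; lra. right. field. lra. }
  assert (m <= d1) by nra.
  apply Hd1; [|lra].
  replace (u * v - x * y) with (u * (v - y) + (u - x) * y) by ring.
  assert (Hu' : Rabs u <= Rabs x + 1).
  { replace u with (x + (u - x)) by ring.
    eapply Rle_trans. apply Rabs_triang. lra. }
  eapply Rle_lt_trans. apply Rabs_triang. rewrite !Rabs_mult.
  pose proof (Rabs_pos (v - y)); pose proof (Rabs_pos (u - x)); pose proof (Rabs_pos u).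
  apply Rle_lt_trans with ((Rabs x + 1) * m + m * Rabs y).
  apply Rplus_le_compat. apply Rmult_le_compat; lra. apply Rmult_le_compat_r; lra.
  nra.
Qed.

Lemma C2_cont1 f x y : continuity_2d_pt f x y -> continuity_pt (fun u => f u y) x.
Proof.
  intros H. apply continuity_pt_filterlim. intros P [eps HP].
  destruct (H eps) as [d Hd]. exists d. intros u Hu. apply HP.
  apply Hd. exact Hu. unfold Rminus; rewrite Rplus_opp_r, Rabs_R0; apply cond_pos.
Qed.
Lemma C2_cont2 f x y : continuity_2d_pt f x y -> continuity_pt (fun v => f x v) y.
Proof.
  intros H. apply continuity_pt_filterlim. intros P [eps HP].
  destruct (H eps) as [d Hd]. exists d. intros u Hu. apply HP.
  apply Hd. unfold Rminus; rewrite Rplus_opp_r, Rabs_R0; apply cond_pos. exact Hu.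
Qed.

Lemma cpt_cont g x : continuity_pt g x -> continuous g x.
Proof. intros H. apply continuity_pt_filterlim. exact H. Qed.

Lemma RInt_minus_R (f g : R -> R) a b : ex_RInt f a b -> ex_RInt g a b ->
  RInt (fun x => f x - g x) a b = RInt f a b - RInt g a b.
Proof. intros. apply (RInt_minus f g a b); auto. Qed.
Lemma RInt_plus_R (f g : R -> R) a b : ex_RInt f a b -> ex_RInt g a b ->
  RInt (fun x => f x + g x) a b = RInt f a b + RInt g a b.
Proof. intros. apply (RInt_plus f g a b); auto. Qed.
Lemma RInt_scal_R (f : R -> R) a b l : ex_RInt f a b ->
  RInt (fun x => l * f x) a b = l * RInt f a b.
Proof. intros. apply (RInt_scal f a b l); auto. Qed.

Lemma diff2 f fx ft x y : C2 fx -> C2 ft -> is_dx f fx -> is_dt f ft ->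
  differentiable_pt_lim f x y (fx x y) (ft x y).
Proof.
  intros Cx Ct Dx Dt eps.
  assert (He2 : 0 < eps / 2) by (pose proof (cond_pos eps); lra).
  destruct (Cx x y (mkposreal _ He2)) as [d1 H1].
  destruct (Ct x y (mkposreal _ He2)) as [d2 H2].
  assert (Hd : 0 < Rmin d1 d2) by (apply Rmin_pos; apply cond_pos).
  exists (mkposreal _ Hd). simpl. intros u v Hu Hv.
  pose proof (Rmin_l d1 d2); pose proof (Rmin_r d1 d2).
  destruct (MVT_cor4 (fun z => f z v) (fun z => fx z v) x (Rabs (u - x)))
    with (b := u) as [c [Hc1 Hc2]].
  { intros c _. apply is_derive_Reals. apply Dx. }
  { lra. }
  destruct (MVT_cor4 (fun z => f x z) (fun z => ft x z) y (Rabs (v - y)))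
    with (b := v) as [c' [Hc1' Hc2']].
  { intros c' _. apply is_derive_Reals. apply Dt. }
  { lra. }
  simpl in *.
  assert (E1 : Rabs (fx c v - fx x y) < eps / 2).
  { apply H1; lra. }
  assert (E2 : Rabs (ft x c' - ft x y) < eps / 2).
  { apply H2. unfold Rminus; rewrite Rplus_opp_r, Rabs_R0. apply cond_pos. lra. }
  replace (f u v - f x y - (fx x y * (u - x) + ft x y * (v - y))) with
    ((fx c v - fx x y) * (u - x) + (ft x c' - ft x y) * (v - y)).
  2:{ replace (f u v - f x y) with ((f u v - f x v) + (f x v - f x y)) by ring.
      rewrite Hc1, Hc1'. ring. }
  eapply Rle_trans. apply Rabs_triang. rewrite !Rabs_mult.
  pose proof (Rmax_l (Rabs (u - x)) (Rabs (v - y))).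
  pose proof (Rmax_r (Rabs (u - x)) (Rabs (v - y))).
  pose proof (Rabs_pos (u - x)); pose proof (Rabs_pos (v - y)).
  pose proof (Rabs_pos (fx c v - fx x y)); pose proof (Rabs_pos (ft x c' - ft x y)).
  apply Rle_trans with (eps / 2 * Rmax (Rabs (u - x)) (Rabs (v - y)) +
                        eps / 2 * Rmax (Rabs (u - x)) (Rabs (v - y))).
  apply Rplus_le_compat; apply Rmult_le_compat; lra.
  lra.
Qed.

Lemma chain_lin f fx ft xi t : C2 fx -> C2 ft -> is_dx f fx -> is_dt f ft ->
  is_derive (fun s => f (xi * s) s) t (xi * fx (xi * t) t + ft (xi * t) t).
Proof.
  intros Cx Ct Dx Dt. apply is_derive_Reals.
  replace (xi * fx (xi * t) t + ft (xi * t) t) with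
    (fx (xi * t) t * xi + ft (xi * t) t * 1) by ring.
  apply (derivable_pt_lim_comp_2d f (fun s => xi * s) (fun s => s)).
  apply diff2; auto.
  apply is_derive_Reals. auto_derive; auto; ring.
  apply is_derive_Reals. auto_derive; auto; ring.
Qed.

Lemma C2_ex_RInt K a b t : C2 K -> ex_RInt (fun xi => K xi t) a b.
Proof.
  intros C. apply (@ex_RInt_continuous R_CompleteNormedModule). intros z _. apply cpt_cont.
  apply C2_cont1. apply C.
Qed.

Lemma ex_RInt_minus_R (f g : R -> R) a b : ex_RInt f a b -> ex_RInt g a b ->
  ex_RInt (fun x => f x - g x) a b.
Proof. intros. apply (@ex_RInt_minus R_NormedModule f g a b); auto. Qed.
Lemma ex_RInt_plus_R (f g : R -> R) a b : ex_RInt f a b -> ex_RInt g a b ->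
  ex_RInt (fun x => f x + g x) a b.
Proof. intros. apply (@ex_RInt_plus R_NormedModule f g a b); auto. Qed.
Lemma ex_RInt_scal_R (f : R -> R) a b l : ex_RInt f a b ->
  ex_RInt (fun x => l * f x) a b.
Proof. intros. apply (@ex_RInt_scal R_NormedModule f a b l); auto. Qed.

Lemma param_cont K a b t : a <= b -> C2 K ->
  continuous (fun s => RInt (fun xi => K xi s) a b) t.
Proof.
  intros Hab C. apply cpt_cont. intros eps Heps.
  assert (He : 0 < eps / (b - a + 1)) by (apply Rdiv_lt_0_compat; lra).
  destruct (uniform_continuity_2d_1d K a b t (fun x _ => C x t) (mkposreal _ He))
    as [d Hd].
  exists d. split. apply cond_pos. intros s [_ Hs]. simpl in Hs. unfold R_dist in Hs.
  simpl. unfold R_dist.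
  rewrite <- RInt_minus_R by (apply C2_ex_RInt; auto).
  apply Rle_lt_trans with ((b - a) * (eps / (b - a + 1))).
  apply abs_RInt_le_const. exact Hab.
  apply ex_RInt_minus_R; apply C2_ex_RInt; auto.
  intros z Hz. left. pose proof (cond_pos d). apply Rabs_def2 in Hs.
  apply (Hd z t z s); try lra.
  unfold Rminus; rewrite Rplus_opp_r, Rabs_R0. apply cond_pos.
  apply Rlt_le_trans with ((b - a + 1) * (eps / (b - a + 1))).
  apply Rmult_lt_compat_r; lra. right. field. lra.
Qed.

Lemma param_deriv K dK a b t : C2 K -> C2 dK ->
  (forall xi s, is_derive (fun s => K xi s) s (dK xi s)) ->
  is_derive (fun s => RInt (fun xi => K xi s) a b) t (RInt (fun xi => dK xi t) a b).
Proof.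
  intros C CD D.
  assert (E : RInt (fun xi => dK xi t) a b = RInt (fun xi => Derive (fun u => K xi u) t) a b).
  { apply RInt_ext. intros x _. symmetry. apply is_derive_unique. apply D. }
  rewrite E.
  apply (is_derive_RInt_param (fun s xi => K xi s) a b t).
  - apply filter_forall. intros x0 xi _. eexists. apply D.
  - intros xi _. apply continuity_2d_pt_ext with (f := fun u v => dK v u).
    intros u v. symmetry. apply is_derive_unique. apply D.
    apply C2_swap. exact CD.
  - apply filter_forall. intros y. apply C2_ex_RInt. exact C.
Qed.

Record TF (phi phix phit : R -> R -> R) (a b T1 T2 : R) : Prop := mkTF {
  tf_ab : a < b; tf_T1 : 0 < T1; tf_T12 : T1 < T2;
  tf_c : C2 phi; tf_cx : C2 phix; tf_ct : C2 phit;
  tf_dx : is_dx phi phix; tf_dt : is_dt phi phit;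
  tf_supp : forall x t, (x <= a \/ b <= x \/ t <= T1 \/ T2 <= t) ->
     phi x t = 0 /\ phix x t = 0 /\ phit x t = 0 }.

Lemma zero_deriv (f : R -> R) x r : 0 < r -> (forall y, Rabs (y - x) < r -> f y = 0) ->
  derivable_pt_lim f x 0.
Proof.
  intros Hr H eps Heps. exists (mkposreal r Hr). intros h Hh0 Hh. simpl in Hh.
  assert (E1 : f (x + h) = 0). { apply H. replace (x + h - x) with h by ring. auto. }
  assert (E2 : f x = 0). { apply H. unfold Rminus; rewrite Rplus_opp_r, Rabs_R0; auto. }
  rewrite E1, E2. replace ((0 - 0) / h - 0) with 0 by (field; auto). rewrite Rabs_R0. auto.
Qed.

Lemma smooth2_cont f : smooth2 f -> continuous2 f.
Proof. intros H. destruct H. auto. Qed.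

Lemma TF_of phi phix phit : test_fun phi -> is_dx phi phix -> is_dt phi phit ->
  exists a b T1 T2, TF phi phix phit a b T1 T2.
Proof.
  intros [Hs [a0 [b0 [S1 [S2 [HS1 Hz]]]]]] Dx Dt.
  destruct Hs as [fx ft Cphi Dfx Dft Sfx Sft].
  assert (Ex : phix = fx).
  { extensionality x; extensionality t. eapply uniqueness_limite. apply Dx. apply Dfx. }
  assert (Et : phit = ft).
  { extensionality x; extensionality t. eapply uniqueness_limite. apply Dt. apply Dft. }
  exists (a0 - 1), (Rmax a0 b0 + 1), (S1 / 2), (Rmax S1 S2 + 1).
  pose proof (Rmax_l a0 b0); pose proof (Rmax_r a0 b0).
  pose proof (Rmax_l S1 S2); pose proof (Rmax_r S1 S2).
  constructor; try lra.
  - apply C2_of_cont2; auto.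
  - subst; apply C2_of_cont2; apply smooth2_cont; auto.
  - subst; apply C2_of_cont2; apply smooth2_cont; auto.
  - auto.
  - auto.
  - intros x t Hxt. split; [|split].
    + apply Hz. lra.
    + eapply uniqueness_limite. apply Dx.
      destruct Hxt as [Hq|[Hq|[Hq|Hq]]].
      * apply zero_deriv with 1. lra. intros y Hy. apply Rabs_def2 in Hy. apply Hz. lra.
      * apply zero_deriv with 1. lra. intros y Hy. apply Rabs_def2 in Hy. apply Hz. lra.
      * apply zero_deriv with 1. lra. intros y Hy. apply Hz. lra.
      * apply zero_deriv with 1. lra. intros y Hy. apply Hz. lra.
    + eapply uniqueness_limite. apply Dt.
      destruct Hxt as [Hq|[Hq|[Hq|Hq]]].
      * apply zero_deriv with 1. lra. intros y Hy. apply Hz. lra.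
      * apply zero_deriv with 1. lra. intros y Hy. apply Hz. lra.
      * apply zero_deriv with (S1 / 2). lra. intros y Hy. apply Rabs_def2 in Hy. apply Hz. lra.
      * apply zero_deriv with 1. lra. intros y Hy. apply Rabs_def2 in Hy. apply Hz. lra.
Qed.

Lemma D_mult f g x df dg : is_derive f x df -> is_derive g x dg ->
  is_derive (fun y => f y * g y) x (df * g x + f x * dg).
Proof.
  intros H1 H2. apply is_derive_Reals in H1, H2. apply is_derive_Reals.
  apply (derivable_pt_lim_mult f g x df dg H1 H2).
Qed.
Lemma D_plus f g x df dg : is_derive f x df -> is_derive g x dg ->
  is_derive (fun y => f y + g y) x (df + dg).
Proof.
  intros H1 H2. apply is_derive_Reals in H1, H2. apply is_derive_Reals.
  apply (derivable_pt_lim_plus f g x df dg H1 H2).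
Qed.
Lemma D_minus f g x df dg : is_derive f x df -> is_derive g x dg ->
  is_derive (fun y => f y - g y) x (df - dg).
Proof.
  intros H1 H2. apply is_derive_Reals in H1, H2. apply is_derive_Reals.
  apply (derivable_pt_lim_minus f g x df dg H1 H2).
Qed.
Lemma D_const c x : is_derive (fun _ => c) x 0.
Proof. apply is_derive_Reals. apply derivable_pt_lim_const. Qed.
Lemma D_id x : is_derive (fun y => y) x 1.
Proof. apply is_derive_Reals. apply derivable_pt_lim_id. Qed.
Lemma D_eq (f : R -> R) (x l l' : R) : l = l' -> is_derive f x l -> is_derive f x l'.
Proof. intros ->; auto. Qed.

Lemma cont_of_der (f df : R -> R) : (forall x, is_derive f x (df x)) -> forall z, continuity_pt f z.
Proof.
  intros H z. apply derivable_continuous_pt. exists (df z). apply is_derive_Reals. apply H.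
Qed.

Lemma C2_fun1 g : (forall z, continuity_pt g z) -> C2 (fun u _ => g u).
Proof. intros H. apply (C2_comp1 g (fun u _ => u)); auto. apply C2_id1. Qed.
Lemma C2_minus f g : C2 f -> C2 g -> C2 (fun u v => f u v - g u v).
Proof. intros Hf Hg x y. apply continuity_2d_pt_minus; auto. Qed.

Lemma C2_opp f : C2 f -> C2 (fun u v => - f u v).
Proof. intros Hf x y. apply continuity_2d_pt_opp; auto. Qed.

Ltac c2 := repeat first
  [ apply C2_minus | apply C2_plus | apply C2_opp | apply C2_mult | apply C2_const | apply C2_id1
  | apply C2_id2 | apply C2_lin | (apply C2_fun1; solve [auto]) | assumption ].

Ltac rring := match goal with |- ?x = ?y => change (@eq R x y); ring end.

Definition Phi (phi : R -> R -> R) T1 T2 s := RInt (fun t => phi (s * t) t) T1 T2.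

Lemma outer_ex K a b T1 T2 : a <= b -> C2 K ->
  ex_RInt (fun t => RInt (fun xi => K xi t) a b) T1 T2.
Proof.
  intros Hab C. apply (@ex_RInt_continuous R_CompleteNormedModule).
  intros z _. apply param_cont; auto.
Qed.

Lemma RInt_zero_ext (f : R -> R) a b : (forall x, Rmin a b < x < Rmax a b -> f x = 0) ->
  RInt f a b = 0.
Proof.
  intros H. rewrite (RInt_ext f (fun _ => 0)) by auto.
  rewrite RInt_const. unfold scal; simpl; unfold mult; simpl. ring.
Qed.

Lemma wedge phi phix phit a b T1 T2 (eta eta' q : R -> R) al be :
  TF phi phix phit a b T1 T2 -> al <= be ->
  (forall xi, is_derive eta xi (eta' xi)) ->
  (forall xi, is_derive q xi (xi * eta' xi)) ->
  RInt (fun t => RInt (fun xi => t * (eta xi * phit (xi * t) t + q xi * phix (xi * t) t))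
     al be) T1 T2
  = (q be - be * eta be) * Phi phi T1 T2 be - (q al - al * eta al) * Phi phi T1 T2 al.
Proof.
  intros T Hab De Dq.
  pose proof (tf_c _ _ _ _ _ _ _ T) as Cp.
  pose proof (tf_cx _ _ _ _ _ _ _ T) as Cx.
  pose proof (tf_ct _ _ _ _ _ _ _ T) as Ct.
  pose proof (tf_dx _ _ _ _ _ _ _ T) as Dx.
  pose proof (tf_dt _ _ _ _ _ _ _ T) as Dt.
  pose proof (tf_T1 _ _ _ _ _ _ _ T) as HT1.
  pose proof (tf_T12 _ _ _ _ _ _ _ T) as HT12.
  pose proof (cont_of_der _ _ De) as Ce.
  pose proof (cont_of_der _ _ Dq) as Cq.
  set (K := fun xi t => t * eta xi * phi (xi * t) t).
  set (dK := fun xi t => eta xi * (phi (xi * t) t + t * (xi * phix (xi * t) t + phit (xi * t) t))).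
  set (hd := fun xi t => eta xi * phi (xi * t) t + (xi * eta xi - q xi) * (t * phix (xi * t) t)).
  set (h := fun xi t => (xi * eta xi - q xi) * phi (xi * t) t).
  assert (CK : C2 K) by (unfold K; c2).
  assert (CdK : C2 dK) by (unfold dK; c2).
  assert (Chd : C2 hd) by (unfold hd; c2).
  assert (Ch : C2 h) by (unfold h; c2).
  assert (DK : forall xi s, is_derive (fun s => K xi s) s (dK xi s)).
  { intros xi s. unfold K, dK.
    apply D_eq with (1 * eta xi * phi (xi * s) s + s * eta xi * (xi * phix (xi * s) s + phit (xi * s) s)).
    ring.
    apply (D_mult (fun s => s * eta xi) (fun s => phi (xi * s) s)).
    apply D_eq with (1 * eta xi + s * 0). ring.
    apply (D_mult (fun s => s) (fun _ => eta xi)). apply D_id. apply D_const.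
    apply chain_lin; auto. }
  assert (Dh : forall t xi, is_derive (fun xi => h xi t) xi (hd xi t)).
  { intros t xi. unfold h, hd.
    apply D_eq with ((1 * eta xi + xi * eta' xi - xi * eta' xi) * phi (xi * t) t
       + (xi * eta xi - q xi) * (t * phix (xi * t) t)). ring.
    apply (D_mult (fun xi => xi * eta xi - q xi) (fun xi => phi (xi * t) t)).
    apply D_minus. apply (D_mult (fun xi => xi) eta). apply D_id. apply De. apply Dq.
    apply D_eq with (phix (xi * t) t * t). ring.
    apply is_derive_Reals.
    apply (derivable_pt_lim_comp (fun xi => xi * t) (fun y => phi y t) xi t).
    apply is_derive_Reals. apply D_eq with (1 * t + xi * 0). ring.
    apply (D_mult (fun xi => xi) (fun _ => t)). apply D_id.
    apply D_const. apply Dx. }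
  assert (Inner : forall t, RInt (fun xi => t * (eta xi * phit (xi * t) t + q xi * phix (xi * t) t)) al be
     = RInt (fun xi => dK xi t) al be - (h be t - h al t)).
  { intros t.
    rewrite (RInt_ext _ (fun xi => dK xi t - hd xi t)).
    2:{ intros x _. unfold dK, hd. rring. }
    rewrite RInt_minus_R by (apply C2_ex_RInt; auto).
    f_equal.
    apply is_RInt_unique.
    apply (@is_RInt_derive R_CompleteNormedModule (fun xi => h xi t) (fun xi => hd xi t)).
    intros x _. apply Dh.
    intros x _. apply cpt_cont. apply C2_cont1. apply Chd. }
  rewrite (RInt_ext _ (fun t => RInt (fun xi => dK xi t) al be - (h be t - h al t))).
  2:{ intros t _. apply Inner. }
  assert (Eh : forall s, ex_RInt (fun t => h s t) T1 T2).
  { intros s. apply (@ex_RInt_continuous R_CompleteNormedModule). intros z _.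
    apply cpt_cont. apply C2_cont2. apply Ch. }
  rewrite RInt_minus_R.
  2:{ apply outer_ex; auto. }
  2:{ apply ex_RInt_minus_R; apply Eh. }
  rewrite RInt_minus_R by apply Eh.
  assert (EJ : RInt (fun t => RInt (fun xi => dK xi t) al be) T1 T2 =
               RInt (fun xi => K xi T2) al be - RInt (fun xi => K xi T1) al be).
  { apply is_RInt_unique.
    apply (@is_RInt_derive R_CompleteNormedModule (fun t => RInt (fun xi => K xi t) al be)).
    intros x _. apply param_deriv; auto.
    intros x _. apply param_cont; auto. }
  rewrite EJ.
  assert (Z : forall s, (s <= T1 \/ T2 <= s) -> RInt (fun xi => K xi s) al be = 0).
  { intros s Hs. apply RInt_zero_ext. intros x _. unfold K.
    destruct (tf_supp _ _ _ _ _ _ _ T (x * s) s) as [-> _]. tauto. ring. }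
  rewrite (Z T1), (Z T2) by lra.
  assert (Hh : forall s, RInt (fun t => h s t) T1 T2 = (s * eta s - q s) * Phi phi T1 T2 s).
  { intros s. unfold h, Phi. apply RInt_scal_R.
    apply (@ex_RInt_continuous R_CompleteNormedModule). intros z _.
    apply cpt_cont. apply (C2_cont2 (fun xi t => phi (xi * t) t)). c2. }
  rewrite !Hh. rring.
Qed.

Lemma is_to_int_ab f a b I : is_RInt f a b I -> int_ab f a b I.
Proof.
  intros H. exists (ex_RInt_Reals_0 f a b (ex_intro _ I H)).
  rewrite <- RInt_Reals. apply is_RInt_unique; auto.
Qed.

Lemma piece_is (P : R -> R -> R) (f : R -> R) al be t : al <= be -> C2 P ->
  (forall xi, al < xi < be -> f xi = P xi t) ->
  is_RInt f al be (RInt (fun xi => P xi t) al be).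
Proof.
  intros Hab C H. apply is_RInt_ext with (fun xi => P xi t).
  intros x Hx. rewrite Rmin_left in Hx by lra. rewrite Rmax_right in Hx by lra.
  symmetry; apply H; auto.
  apply (@RInt_correct R_CompleteNormedModule). apply C2_ex_RInt. auto.
Qed.

Lemma decomp5 (F P1 P2 P3 P4 P5 : R -> R -> R) a b T1 T2 s0 s1 s2 s3 s4 s5 :
  a < b -> 0 < T1 -> T1 < T2 ->
  s0 <= s1 -> s1 <= s2 -> s2 <= s3 -> s3 <= s4 -> s4 <= s5 ->
  (forall t, T1 <= t <= T2 -> s0 * t < a /\ b < s5 * t) ->
  (forall x t, 0 < t -> (x < a \/ b < x \/ t < T1 \/ T2 < t) -> F x t = 0) ->
  C2 P1 -> C2 P2 -> C2 P3 -> C2 P4 -> C2 P5 ->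
  (forall t xi, T1 <= t <= T2 -> s0 < xi < s1 -> t * F (xi * t) t = P1 xi t) ->
  (forall t xi, T1 <= t <= T2 -> s1 < xi < s2 -> t * F (xi * t) t = P2 xi t) ->
  (forall t xi, T1 <= t <= T2 -> s2 < xi < s3 -> t * F (xi * t) t = P3 xi t) ->
  (forall t xi, T1 <= t <= T2 -> s3 < xi < s4 -> t * F (xi * t) t = P4 xi t) ->
  (forall t xi, T1 <= t <= T2 -> s4 < xi < s5 -> t * F (xi * t) t = P5 xi t) ->
  dbl_int F (RInt (fun t => RInt (fun xi => P1 xi t) s0 s1) T1 T2
           + RInt (fun t => RInt (fun xi => P2 xi t) s1 s2) T1 T2
           + RInt (fun t => RInt (fun xi => P3 xi t) s2 s3) T1 T2
           + RInt (fun t => RInt (fun xi => P4 xi t) s3 s4) T1 T2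
           + RInt (fun t => RInt (fun xi => P5 xi t) s4 s5) T1 T2).
Proof.
  intros Hab HT1 HT12 H01 H12 H23 H34 H45 Hs HF C1 C2' C3 C4 C5 E1 E2 E3 E4 E5.
  exists a, b, T1, T2. split; [lra|split; [lra|split; [lra|split; [exact HF|]]]].
  exists (fun t => RInt (fun xi => P1 xi t) s0 s1 + RInt (fun xi => P2 xi t) s1 s2
           + RInt (fun xi => P3 xi t) s2 s3 + RInt (fun xi => P4 xi t) s3 s4
           + RInt (fun xi => P5 xi t) s4 s5).
  split.
  - intros t Ht. apply is_to_int_ab.
    assert (Ht0 : 0 < t) by lra.
    set (f := fun xi => t * F (xi * t) t).
    assert (Hall : is_RInt f s0 s5 (RInt (fun xi => P1 xi t) s0 s1 + RInt (fun xi => P2 xi t) s1 s2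
           + RInt (fun xi => P3 xi t) s2 s3 + RInt (fun xi => P4 xi t) s3 s4
           + RInt (fun xi => P5 xi t) s4 s5)).
    { apply (is_RInt_Chasles f s0 s4 s5); [|apply piece_is; auto; intros; apply E5; auto].
      apply (is_RInt_Chasles f s0 s3 s4); [|apply piece_is; auto; intros; apply E4; auto].
      apply (is_RInt_Chasles f s0 s2 s3); [|apply piece_is; auto; intros; apply E3; auto].
      apply (is_RInt_Chasles f s0 s1 s2); apply piece_is; auto; intros.
      apply E1; auto. apply E2; auto. }
    set (G := RInt (fun xi => P1 xi t) s0 s1 + RInt (fun xi => P2 xi t) s1 s2
           + RInt (fun xi => P3 xi t) s2 s3 + RInt (fun xi => P4 xi t) s3 s4
           + RInt (fun xi => P5 xi t) s4 s5) in *.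
    assert (Hx : is_RInt (fun y => F y t) (s0 * t) (s5 * t) G).
    { apply is_RInt_ext with (fun y => scal (/ t) (f (/ t * y + 0))).
      { intros y _. unfold f.
        change (scal (/ t) (t * F ((/ t * y + 0) * t) t)) with (/ t * (t * F ((/ t * y + 0) * t) t)).
        replace ((/ t * y + 0) * t) with y by (field; lra). change (@eq R (/ t * (t * F y t)) (F y t)). field. lra. }
      apply (is_RInt_comp_lin f (/ t) 0 (s0 * t) (s5 * t) G).
      replace (/ t * (s0 * t) + 0) with s0 by (field; lra).
      replace (/ t * (s5 * t) + 0) with s5 by (field; lra). exact Hall. }
    destruct (Hs t Ht) as [Ha Hb].
    assert (Ex : ex_RInt (fun y => F y t) (s0 * t) (s5 * t)) by (eexists; exact Hx).
    assert (Ex1 : ex_RInt (fun y => F y t) (s0 * t) b).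
    { apply (@ex_RInt_Chasles_1 R_CompleteNormedModule) with (s5 * t). lra. exact Ex. }
    assert (Ex2 : ex_RInt (fun y => F y t) b (s5 * t)).
    { apply (@ex_RInt_Chasles_2 R_CompleteNormedModule) with (s0 * t). lra. exact Ex. }
    assert (Ex3 : ex_RInt (fun y => F y t) (s0 * t) a).
    { apply (@ex_RInt_Chasles_1 R_CompleteNormedModule) with b. lra. exact Ex1. }
    assert (Ex4 : ex_RInt (fun y => F y t) a b).
    { apply (@ex_RInt_Chasles_2 R_CompleteNormedModule) with (s0 * t). lra. exact Ex1. }
    assert (Z1 : RInt (fun y => F y t) (s0 * t) a = 0).
    { apply RInt_zero_ext. intros x Hx'. rewrite Rmin_left in Hx' by lra.
      rewrite Rmax_right in Hx' by lra. apply HF. lra. lra. }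
    assert (Z2 : RInt (fun y => F y t) b (s5 * t) = 0).
    { apply RInt_zero_ext. intros x Hx'. rewrite Rmin_left in Hx' by lra.
      rewrite Rmax_right in Hx' by lra. apply HF. lra. lra. }
    assert (Eq : RInt (fun y => F y t) a b = G).
    { rewrite <- (is_RInt_unique _ _ _ _ Hx).
      rewrite <- (@RInt_Chasles R_CompleteNormedModule _ (s0 * t) b (s5 * t)) by auto.
      rewrite <- (@RInt_Chasles R_CompleteNormedModule _ (s0 * t) a b) by auto.
      rewrite Z1, Z2. assert (HH : forall r : R, r = 0 + r + 0) by (intro; ring). apply HH. }
    rewrite <- Eq. apply (@RInt_correct R_CompleteNormedModule). exact Ex4.
  - apply is_to_int_ab.
    apply (@is_RInt_plus R_NormedModule); [apply (@is_RInt_plus R_NormedModule)|];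
      [apply (@is_RInt_plus R_NormedModule)| |]; [apply (@is_RInt_plus R_NormedModule)| | |].
    all: apply (@RInt_correct R_CompleteNormedModule); apply outer_ex; auto.
Qed.

Lemma param_cont_gen K a b t : C2 K ->
  continuous (fun s => RInt (fun xi => K xi s) a b) t.
Proof.
  intros C. destruct (Rle_lt_dec a b) as [H|H].
  - apply param_cont; auto.
  - apply continuous_ext with (fun s => - RInt (fun xi => K xi s) b a).
    { intros s. rewrite <- (opp_RInt_swap (V := R_CompleteNormedModule)).
      assert (HH: forall r : R, - (opp r) = r) by (intro r; unfold opp; simpl; ring).
      rewrite HH; reflexivity. apply C2_ex_RInt; auto. }
    apply (@continuous_opp R_UniformSpace R_AbsRing R_NormedModule (fun s => RInt (fun xi => K xi s) b a)).
    apply param_cont; auto. lra.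
Qed.

Lemma param_deriv' K dK a b t : (forall s, ex_RInt (fun xi => K xi s) a b) -> C2 dK ->
  (forall xi s, is_derive (fun s => K xi s) s (dK xi s)) ->
  is_derive (fun s => RInt (fun xi => K xi s) a b) t (RInt (fun xi => dK xi t) a b).
Proof.
  intros C CD D.
  assert (E : RInt (fun xi => dK xi t) a b = RInt (fun xi => Derive (fun u => K xi u) t) a b).
  { apply RInt_ext. intros x _. symmetry. apply is_derive_unique. apply D. }
  rewrite E.
  apply (is_derive_RInt_param (fun s xi => K xi s) a b t).
  - apply filter_forall. intros x0 xi _. eexists. apply D.
  - intros xi _. apply continuity_2d_pt_ext with (f := fun u v => dK v u).
    intros u v. symmetry. apply is_derive_unique. apply D.
    apply C2_swap. exact CD.
  - apply filter_forall. intros y. apply C.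
Qed.


Lemma Phi_deriv phi phix phit a b T1 T2 s : TF phi phix phit a b T1 T2 ->
  is_derive (Phi phi T1 T2) s (RInt (fun t => t * phix (s * t) t) T1 T2).
Proof.
  intros T.
  pose proof (tf_c _ _ _ _ _ _ _ T) as Cp.
  pose proof (tf_cx _ _ _ _ _ _ _ T) as Cx.
  pose proof (tf_dx _ _ _ _ _ _ _ T) as Dx.
  unfold Phi.
  apply (param_deriv' (fun t s => phi (s * t) t) (fun t s => t * phix (s * t) t)).
  - intros s'. apply (C2_ex_RInt (fun t s => phi (s * t) t)).
    apply (C2_swap (fun s t => phi (s * t) t)). c2.
  - apply (C2_swap (fun s t => t * phix (s * t) t)). c2.
  - intros t s'. apply is_derive_Reals.
    replace (t * phix (s' * t) t) with (phix (s' * t) t * t) by ring.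
    apply (derivable_pt_lim_comp (fun s => s * t) (fun y => phi y t) s' t).
    apply is_derive_Reals. apply D_eq with (1 * t + s' * 0). ring.
    apply (D_mult (fun s => s) (fun _ => t)). apply D_id. apply D_const.
    apply Dx.
Qed.

Definition Psi (phi : R -> R -> R) T1 T2 A0 s :=
  RInt (fun t => RInt (fun xi => t * phi (xi * t) t) A0 s) T1 T2.

Lemma Psi_deriv phi phix phit a b T1 T2 A0 s : TF phi phix phit a b T1 T2 ->
  is_derive (Psi phi T1 T2 A0) s (RInt (fun t => t * phi (s * t) t) T1 T2).
Proof.
  intros T.
  pose proof (tf_c _ _ _ _ _ _ _ T) as Cp.
  assert (Ck : C2 (fun xi t => t * phi (xi * t) t)) by c2.
  unfold Psi.
  apply (param_deriv' (fun t s => RInt (fun xi => t * phi (xi * t) t) A0 s)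
                      (fun t s => t * phi (s * t) t)).
  - intros s'. apply (@ex_RInt_continuous R_CompleteNormedModule).
    intros z _. apply (param_cont_gen (fun xi t => t * phi (xi * t) t)). exact Ck.
  - apply (C2_swap (fun s t => t * phi (s * t) t)). c2.
  - intros t s'.
    apply (is_derive_RInt (fun xi => t * phi (xi * t) t) _ A0 s').
    + apply filter_forall. intros b0. apply (@RInt_correct R_CompleteNormedModule).
      apply (C2_ex_RInt (fun xi t => t * phi (xi * t) t)). exact Ck.
    + apply cpt_cont. apply (C2_cont1 (fun xi t => t * phi (xi * t) t)). apply Ck.
Qed.

Lemma tends_ext f g L : (forall e, 0 < e < 1 -> f e = g e) -> tends g L -> tends f L.
Proof.
  intros H T eta Heta. destruct (T eta Heta) as [d [Hd Hd']].
  exists d. split; auto. intros e H1 H2 H3. rewrite H by lra. auto.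
Qed.

Lemma tends_plus f g : tends f 0 -> tends g 0 -> tends (fun e => f e + g e) 0.
Proof.
  intros Tf Tg eta Heta.
  destruct (Tf (eta/2)) as [d1 [Hd1 H1]]. lra.
  destruct (Tg (eta/2)) as [d2 [Hd2 H2]]. lra.
  exists (Rmin d1 d2). split. apply Rmin_pos; auto.
  intros e He1 He2 He3.
  pose proof (Rmin_l d1 d2); pose proof (Rmin_r d1 d2).
  specialize (H1 e He1 ltac:(lra) He3). specialize (H2 e He1 ltac:(lra) He3).
  rewrite Rminus_0_r in *. eapply Rle_lt_trans. apply Rabs_triang. lra.
Qed.

Lemma tends_scal k f : tends f 0 -> tends (fun e => k * f e) 0.
Proof.
  intros Tf eta Heta.
  destruct (Tf (eta / (Rabs k + 1))) as [d [Hd H]].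
  apply Rdiv_lt_0_compat; auto. pose proof (Rabs_pos k); lra.
  exists d. split; auto. intros e He1 He2 He3. specialize (H e He1 He2 He3).
  rewrite Rminus_0_r in *. rewrite Rabs_mult.
  pose proof (Rabs_pos k). pose proof (Rabs_pos (f e)).
  apply Rle_lt_trans with ((Rabs k + 1) * Rabs (f e)). nra.
  apply Rlt_le_trans with ((Rabs k + 1) * (eta / (Rabs k + 1))).
  apply Rmult_lt_compat_l; lra. right; field; lra.
Qed.

Lemma tends_emul f : tends f 0 -> tends (fun e => e * f e) 0.
Proof.
  intros Tf eta Heta. destruct (Tf eta Heta) as [d [Hd H]].
  exists d. split; auto. intros e He1 He2 He3. specialize (H e He1 He2 He3).
  rewrite Rminus_0_r in *. rewrite Rabs_mult. rewrite (Rabs_pos_eq e) by lra.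
  pose proof (Rabs_pos (f e)). nra.
Qed.

Lemma tends_e_const c : tends (fun e => e * c) 0.
Proof.
  intros eta Heta. exists (eta / (Rabs c + 1)). split.
  apply Rdiv_lt_0_compat; auto. pose proof (Rabs_pos c); lra.
  intros e He1 He2 He3. rewrite Rminus_0_r, Rabs_mult, (Rabs_pos_eq e) by lra.
  pose proof (Rabs_pos c).
  apply Rle_lt_trans with (e * (Rabs c + 1)). nra.
  apply Rlt_le_trans with (eta / (Rabs c + 1) * (Rabs c + 1)).
  apply Rmult_lt_compat_r; lra. right; field; lra.
Qed.

Lemma tends_const0 : tends (fun _ => 0) 0.
Proof. intros eta Heta. exists 1. split. lra. intros. rewrite Rminus_0_r, Rabs_R0. auto. Qed.

Lemma der_right (P : R -> R) x l : is_derive P x l ->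
  tends (fun e => (P (x + e) - P x) / e - l) 0.
Proof.
  intros D. apply is_derive_Reals in D. intros eta Heta.
  destruct (D eta Heta) as [d Hd]. exists d. split. apply cond_pos.
  intros e He1 He2 He3. rewrite Rminus_0_r. apply Hd. lra.
  rewrite Rabs_pos_eq; lra.
Qed.

Lemma der_left (P : R -> R) x l : is_derive P x l ->
  tends (fun e => (P x - P (x - e)) / e - l) 0.
Proof.
  intros D. apply is_derive_Reals in D. intros eta Heta.
  destruct (D eta Heta) as [d Hd]. exists d. split. apply cond_pos.
  intros e He1 He2 He3. rewrite Rminus_0_r.
  replace ((P x - P (x - e)) / e) with ((P (x + - e) - P x) / - e).
  apply Hd. lra. rewrite Rabs_Ropp, Rabs_pos_eq; lra.
  replace (x + - e) with (x - e) by ring. field. lra.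
Qed.

Lemma der_cont_right (P : R -> R) x l : is_derive P x l ->
  tends (fun e => P (x + e) - P x) 0.
Proof.
  intros D. apply tends_ext with (fun e => e * ((P (x + e) - P x) / e - l) + e * l).
  intros e He. field. lra.
  apply tends_plus. apply tends_emul. apply der_right; auto. apply tends_e_const.
Qed.

Lemma der_cont_left (P : R -> R) x l : is_derive P x l ->
  tends (fun e => P (x - e) - P x) 0.
Proof.
  intros D. apply tends_ext with (fun e => (-1) * (e * ((P x - P (x - e)) / e - l) + e * l)).
  intros e He. field. lra.
  apply tends_scal. apply tends_plus. apply tends_emul. apply der_left; auto. apply tends_e_const.
Qed.

Lemma tends_of0 I L : tends (fun e => I e - L) 0 -> tends I L.
Proof.
  intros T eta Heta. destruct (T eta Heta) as [d [Hd H]]. exists d. split; auto.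
  intros. specialize (H e H0 H1 H2). rewrite Rminus_0_r in H. auto.
Qed.

Lemma liminf_of_tends I : tends I 0 -> liminf_nonneg I.
Proof.
  intros T eta Heta. destruct (T eta Heta) as [d [Hd H]]. exists d. split; auto.
  intros. specialize (H e H0 H1 H2). rewrite Rminus_0_r in H.
  apply Rabs_def2 in H. lra.
Qed.

Lemma choose_AB a b T1 T2 L U : 0 < T1 -> T1 < T2 ->
  exists A0 B0, A0 < L /\ U < B0 /\ forall t, T1 <= t <= T2 -> A0 * t < a /\ b < B0 * t.
Proof.
  intros H1 H2.
  exists (- (Rabs a / T1) - Rabs L - 1), (Rabs b / T1 + Rabs U + 1).
  pose proof (Rabs_pos a); pose proof (Rabs_pos b); pose proof (Rabs_pos L); pose proof (Rabs_pos U).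
  pose proof (Rle_abs L); pose proof (Rle_abs U); pose proof (Rle_abs b).
  pose proof (Rabs_maj2 a); pose proof (Rabs_maj2 L).
  assert (0 <= Rabs a / T1) by (apply Rdiv_le_0_compat; lra).
  assert (0 <= Rabs b / T1) by (apply Rdiv_le_0_compat; lra).
  split; [lra|split; [lra|]].
  intros t Ht. split.
  - assert (Rabs a / T1 * t >= Rabs a).
    { apply Rle_ge. apply Rle_trans with (Rabs a / T1 * T1). right; field; lra.
      apply Rmult_le_compat_l; lra. }
    nra.
  - assert (Rabs b / T1 * t >= Rabs b).
    { apply Rle_ge. apply Rle_trans with (Rabs b / T1 * T1). right; field; lra.
      apply Rmult_le_compat_l; lra. }
    nra.
Qed.

Definition W (q eta : R -> R) s := q s - s * eta s.

Lemma Phi_zero phi phix phit a b T1 T2 A0 :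
  TF phi phix phit a b T1 T2 -> (forall t, T1 <= t <= T2 -> A0 * t < a) ->
  Phi phi T1 T2 A0 = 0.
Proof.
  intros T H. unfold Phi. apply RInt_zero_ext. intros t Ht.
  pose proof (tf_T12 _ _ _ _ _ _ _ T).
  rewrite Rmin_left in Ht by lra. rewrite Rmax_right in Ht by lra.
  apply (tf_supp _ _ _ _ _ _ _ T). left. specialize (H t ltac:(lra)). lra.
Qed.
Lemma Phi_zero' phi phix phit a b T1 T2 B0 :
  TF phi phix phit a b T1 T2 -> (forall t, T1 <= t <= T2 -> b < B0 * t) ->
  Phi phi T1 T2 B0 = 0.
Proof.
  intros T H. unfold Phi. apply RInt_zero_ext. intros t Ht.
  pose proof (tf_T12 _ _ _ _ _ _ _ T).
  rewrite Rmin_left in Ht by lra. rewrite Rmax_right in Ht by lra.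
  apply (tf_supp _ _ _ _ _ _ _ T). right; left. specialize (H t ltac:(lra)). lra.
Qed.

Lemma resid5 phi phix phit a b T1 T2 A0 B0 (c f : R -> R -> R) s1 s2 s3 s4
  (e1 e1' q1 e2 e2' q2 e3 e3' q3 e4 e4' q4 e5 e5' q5 : R -> R) :
  TF phi phix phit a b T1 T2 ->
  A0 <= s1 -> s1 <= s2 -> s2 <= s3 -> s3 <= s4 -> s4 <= B0 ->
  (forall t, T1 <= t <= T2 -> A0 * t < a /\ b < B0 * t) ->
  (forall xi, is_derive e1 xi (e1' xi)) -> (forall xi, is_derive q1 xi (xi * e1' xi)) ->
  (forall xi, is_derive e2 xi (e2' xi)) -> (forall xi, is_derive q2 xi (xi * e2' xi)) ->
  (forall xi, is_derive e3 xi (e3' xi)) -> (forall xi, is_derive q3 xi (xi * e3' xi)) ->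
  (forall xi, is_derive e4 xi (e4' xi)) -> (forall xi, is_derive q4 xi (xi * e4' xi)) ->
  (forall xi, is_derive e5 xi (e5' xi)) -> (forall xi, is_derive q5 xi (xi * e5' xi)) ->
  (forall t xi, 0 < t -> xi < s1 -> c (xi * t) t = e1 xi /\ f (xi * t) t = q1 xi) ->
  (forall t xi, 0 < t -> s1 < xi < s2 -> c (xi * t) t = e2 xi /\ f (xi * t) t = q2 xi) ->
  (forall t xi, 0 < t -> s2 < xi < s3 -> c (xi * t) t = e3 xi /\ f (xi * t) t = q3 xi) ->
  (forall t xi, 0 < t -> s3 < xi < s4 -> c (xi * t) t = e4 xi /\ f (xi * t) t = q4 xi) ->
  (forall t xi, 0 < t -> s4 < xi -> c (xi * t) t = e5 xi /\ f (xi * t) t = q5 xi) ->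
  dbl_int (fun x t => c x t * phit x t + f x t * phix x t)
    ((W q1 e1 s1 - W q2 e2 s1) * Phi phi T1 T2 s1 +
     (W q2 e2 s2 - W q3 e3 s2) * Phi phi T1 T2 s2 +
     (W q3 e3 s3 - W q4 e4 s3) * Phi phi T1 T2 s3 +
     (W q4 e4 s4 - W q5 e5 s4) * Phi phi T1 T2 s4).
Proof.
  intros T H01 H12 H23 H34 H45 HAB D1 Q1 D2 Q2 D3 Q3 D4 Q4 D5 Q5 M1 M2 M3 M4 M5.
  pose proof (tf_cx _ _ _ _ _ _ _ T) as Cx.
  pose proof (tf_ct _ _ _ _ _ _ _ T) as Ct.
  pose proof (tf_T1 _ _ _ _ _ _ _ T) as HT1.
  pose proof (tf_T12 _ _ _ _ _ _ _ T) as HT12.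
  pose proof (tf_ab _ _ _ _ _ _ _ T) as Hab.
  pose proof (cont_of_der _ _ D1); pose proof (cont_of_der _ _ Q1).
  pose proof (cont_of_der _ _ D2); pose proof (cont_of_der _ _ Q2).
  pose proof (cont_of_der _ _ D3); pose proof (cont_of_der _ _ Q3).
  pose proof (cont_of_der _ _ D4); pose proof (cont_of_der _ _ Q4).
  pose proof (cont_of_der _ _ D5); pose proof (cont_of_der _ _ Q5).
  assert (Hz1 : Phi phi T1 T2 A0 = 0).
  { apply (Phi_zero phi phix phit a b T1 T2 A0 T). intros; apply HAB; auto. }
  assert (Hz2 : Phi phi T1 T2 B0 = 0).
  { apply (Phi_zero' phi phix phit a b T1 T2 B0 T). intros; apply HAB; auto. }
  match goal with |- dbl_int _ ?V =>
    replace V with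
     (((q1 s1 - s1 * e1 s1) * Phi phi T1 T2 s1 - (q1 A0 - A0 * e1 A0) * Phi phi T1 T2 A0)
    + ((q2 s2 - s2 * e2 s2) * Phi phi T1 T2 s2 - (q2 s1 - s1 * e2 s1) * Phi phi T1 T2 s1)
    + ((q3 s3 - s3 * e3 s3) * Phi phi T1 T2 s3 - (q3 s2 - s2 * e3 s2) * Phi phi T1 T2 s2)
    + ((q4 s4 - s4 * e4 s4) * Phi phi T1 T2 s4 - (q4 s3 - s3 * e4 s3) * Phi phi T1 T2 s3)
    + ((q5 B0 - B0 * e5 B0) * Phi phi T1 T2 B0 - (q5 s4 - s4 * e5 s4) * Phi phi T1 T2 s4))
    by (rewrite Hz1, Hz2; unfold W; ring) end.
  rewrite <- (wedge phi phix phit a b T1 T2 e1 e1' q1 A0 s1 T H01 D1 Q1).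
  rewrite <- (wedge phi phix phit a b T1 T2 e2 e2' q2 s1 s2 T H12 D2 Q2).
  rewrite <- (wedge phi phix phit a b T1 T2 e3 e3' q3 s2 s3 T H23 D3 Q3).
  rewrite <- (wedge phi phix phit a b T1 T2 e4 e4' q4 s3 s4 T H34 D4 Q4).
  rewrite <- (wedge phi phix phit a b T1 T2 e5 e5' q5 s4 B0 T H45 D5 Q5).
  apply (decomp5 _ (fun xi t => t * (e1 xi * phit (xi * t) t + q1 xi * phix (xi * t) t))
                   (fun xi t => t * (e2 xi * phit (xi * t) t + q2 xi * phix (xi * t) t))
                   (fun xi t => t * (e3 xi * phit (xi * t) t + q3 xi * phix (xi * t) t))
                   (fun xi t => t * (e4 xi * phit (xi * t) t + q4 xi * phix (xi * t) t))
                   (fun xi t => t * (e5 xi * phit (xi * t) t + q5 xi * phix (xi * t) t))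
                   a b T1 T2); auto.
  - intros x t Ht Hx.
    destruct (tf_supp _ _ _ _ _ _ _ T x t) as [_ [-> ->]]. lra. ring.
  - c2.
  - c2.
  - c2.
  - c2.
  - c2.
  - intros t xi Ht Hxi. destruct (M1 t xi ltac:(lra) ltac:(lra)) as [-> ->]. ring.
  - intros t xi Ht Hxi. destruct (M2 t xi ltac:(lra) ltac:(lra)) as [-> ->]. ring.
  - intros t xi Ht Hxi. destruct (M3 t xi ltac:(lra) ltac:(lra)) as [-> ->]. ring.
  - intros t xi Ht Hxi. destruct (M4 t xi ltac:(lra) ltac:(lra)) as [-> ->]. ring.
  - intros t xi Ht Hxi. destruct (M5 t xi ltac:(lra) ltac:(lra)) as [-> ->]. ring.
Qed.

Definition NG (phi : R -> R -> R) T1 T2 (g : R -> R) al be :=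
  RInt (fun t => RInt (fun xi => t * (g xi * phi (xi * t) t)) al be) T1 T2.

Lemma C2_fun1' g : (forall z, continuity_pt g z) -> C2 (fun u _ => g u).
Proof. apply C2_fun1. Qed.

Lemma dens5 phi phix phit a b T1 T2 A0 B0 (c : R -> R -> R) s1 s2 s3 s4
  (g1 g2 g3 g4 g5 : R -> R) :
  TF phi phix phit a b T1 T2 ->
  A0 <= s1 -> s1 <= s2 -> s2 <= s3 -> s3 <= s4 -> s4 <= B0 ->
  (forall t, T1 <= t <= T2 -> A0 * t < a /\ b < B0 * t) ->
  (forall z, continuity_pt g1 z) -> (forall z, continuity_pt g2 z) ->
  (forall z, continuity_pt g3 z) -> (forall z, continuity_pt g4 z) ->
  (forall z, continuity_pt g5 z) ->
  (forall t xi, 0 < t -> xi < s1 -> c (xi * t) t = g1 xi) ->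
  (forall t xi, 0 < t -> s1 < xi < s2 -> c (xi * t) t = g2 xi) ->
  (forall t xi, 0 < t -> s2 < xi < s3 -> c (xi * t) t = g3 xi) ->
  (forall t xi, 0 < t -> s3 < xi < s4 -> c (xi * t) t = g4 xi) ->
  (forall t xi, 0 < t -> s4 < xi -> c (xi * t) t = g5 xi) ->
  dbl_int (fun x t => c x t * phi x t)
    (NG phi T1 T2 g1 A0 s1 + NG phi T1 T2 g2 s1 s2 + NG phi T1 T2 g3 s2 s3
     + NG phi T1 T2 g4 s3 s4 + NG phi T1 T2 g5 s4 B0).
Proof.
  intros T H01 H12 H23 H34 H45 HAB G1 G2 G3 G4 G5 M1 M2 M3 M4 M5.
  pose proof (tf_c _ _ _ _ _ _ _ T) as Cp.
  pose proof (tf_T1 _ _ _ _ _ _ _ T) as HT1.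
  pose proof (tf_T12 _ _ _ _ _ _ _ T) as HT12.
  pose proof (tf_ab _ _ _ _ _ _ _ T) as Hab.
  unfold NG.
  apply (decomp5 _ (fun xi t => t * (g1 xi * phi (xi * t) t))
                   (fun xi t => t * (g2 xi * phi (xi * t) t))
                   (fun xi t => t * (g3 xi * phi (xi * t) t))
                   (fun xi t => t * (g4 xi * phi (xi * t) t))
                   (fun xi t => t * (g5 xi * phi (xi * t) t))
                   a b T1 T2); auto.
  - intros x t Ht Hx.
    destruct (tf_supp _ _ _ _ _ _ _ T x t) as [-> _]. lra. ring.
  - c2.
  - c2.
  - c2.
  - c2.
  - c2.
  - intros t xi Ht Hxi. rewrite (M1 t xi); auto; lra.
  - intros t xi Ht Hxi. rewrite (M2 t xi); auto; lra.
  - intros t xi Ht Hxi. rewrite (M3 t xi); auto; lra.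
  - intros t xi Ht Hxi. rewrite (M4 t xi); auto; lra.
  - intros t xi Ht Hxi. rewrite (M5 t xi); auto; lra.
Qed.

Lemma NG_const phi phix phit a b T1 T2 A0 k al be : TF phi phix phit a b T1 T2 ->
  NG phi T1 T2 (fun _ => k) al be = k * (Psi phi T1 T2 A0 be - Psi phi T1 T2 A0 al).
Proof.
  intros T.
  pose proof (tf_c _ _ _ _ _ _ _ T) as Cp.
  assert (Ck : C2 (fun xi t => t * phi (xi * t) t)) by c2.
  assert (Ex : forall al be t, ex_RInt (fun xi => t * phi (xi * t) t) al be).
  { intros. apply (C2_ex_RInt (fun xi t => t * phi (xi * t) t)). exact Ck. }
  assert (Eo : forall s, ex_RInt (fun t => RInt (fun xi => t * phi (xi * t) t) A0 s) T1 T2).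
  { intros s. apply (@ex_RInt_continuous R_CompleteNormedModule). intros z _.
    apply (param_cont_gen (fun xi t => t * phi (xi * t) t)). exact Ck. }
  unfold NG, Psi.
  rewrite (RInt_ext _ (fun t => k * (RInt (fun xi => t * phi (xi * t) t) A0 be
                                 - RInt (fun xi => t * phi (xi * t) t) A0 al))).
  2:{ intros t _.
      rewrite (RInt_ext _ (fun xi => k * (t * phi (xi * t) t))).
      2:{ intros x _. rring. }
      rewrite RInt_scal_R by auto. f_equal.
      rewrite <- (@RInt_Chasles R_CompleteNormedModule _ A0 al be) by auto.
      assert (HH : forall r s : R, s = plus r s - r) by (intros; unfold plus; simpl; ring).
      apply HH. }
  rewrite RInt_scal_R. f_equal. apply RInt_minus_R; auto.
  apply ex_RInt_minus_R; auto.
Qed.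

Ltac pwtac := unfold pw5; repeat destruct Rlt_dec; try reflexivity; exfalso; nra.


Lemma pw5_1 ul ur e xi t : 0 < t -> xi < ul - e ->
  forall A B C D E, pw5 ul ur e (xi * t) t A B C D E = A.
Proof. intros Ht H A B C D E. pwtac. Qed.
Lemma pw5_2 ul ur e xi t : 0 < t -> ul - e < xi < ul ->
  forall A B C D E, pw5 ul ur e (xi * t) t A B C D E = B.
Proof. intros Ht H A B C D E. pwtac. Qed.
Lemma pw5_3 ul ur e xi t : 0 < t -> 0 < e -> ul < xi < ur ->
  forall A B C D E, pw5 ul ur e (xi * t) t A B C D E = C.
Proof. intros Ht He H A B C D E. pwtac. Qed.
Lemma pw5_4 ul ur e xi t : 0 < t -> 0 < e -> ul < ur -> ur < xi < ur + e ->
  forall A B C D E, pw5 ul ur e (xi * t) t A B C D E = D.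
Proof. intros Ht He Hu H A B C D E. pwtac. Qed.
Lemma pw5_5 ul ur e xi t : 0 < t -> 0 < e -> ul < ur -> ur + e < xi ->
  forall A B C D E, pw5 ul ur e (xi * t) t A B C D E = E.
Proof. intros Ht He Hu H A B C D E. pwtac. Qed.

Lemma divt xi t : 0 < t -> xi * t / t = xi.
Proof. intros. field. lra. Qed.

Lemma ulim_1 ul ur xi t : 0 < t -> xi < ul -> u_lim ul ur (xi * t) t = ul.
Proof. intros. unfold u_lim. repeat destruct Rlt_dec; try reflexivity; exfalso; nra. Qed.
Lemma ulim_3 ul ur xi t : 0 < t -> ul < xi < ur -> u_lim ul ur (xi * t) t = xi.
Proof. intros. unfold u_lim. repeat destruct Rlt_dec; try (apply divt; auto); exfalso; nra. Qed.
Lemma ulim_5 ul ur xi t : 0 < t -> ul < ur -> ur < xi -> u_lim ul ur (xi * t) t = ur.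
Proof. intros. unfold u_lim. repeat destruct Rlt_dec; try reflexivity; exfalso; nra. Qed.

Lemma vlim_1 ul ur vl vr xi t : 0 < t -> xi < ul -> v_lim ul ur vl vr (xi * t) t = vl.
Proof. intros. unfold v_lim. repeat destruct Rlt_dec; try reflexivity; exfalso; nra. Qed.
Lemma vlim_3 ul ur vl vr xi t : 0 < t -> ul < xi < ur -> v_lim ul ur vl vr (xi * t) t = 0.
Proof. intros. unfold v_lim. repeat destruct Rlt_dec; try reflexivity; exfalso; nra. Qed.
Lemma vlim_5 ul ur vl vr xi t : 0 < t -> ul < ur -> ur < xi -> v_lim ul ur vl vr (xi * t) t = vr.
Proof. intros. unfold v_lim. repeat destruct Rlt_dec; try reflexivity; exfalso; nra. Qed.

Lemma Heav_pos y : 0 < y -> Heav y = 1.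
Proof. intros. unfold Heav. destruct Rlt_dec; auto. lra. Qed.
Lemma Heav_neg y : y < 0 -> Heav y = 0.
Proof. intros. unfold Heav. destruct Rlt_dec; auto. lra. Qed.

Lemma reg_1 ul ur wl wr xi t : 0 < t -> ul < ur -> xi < ul -> w_reg ul ur wl wr (xi * t) t = wl.
Proof.
  intros. unfold w_reg. rewrite Heav_pos by nra. rewrite Heav_neg by nra. ring.
Qed.
Lemma reg_3 ul ur wl wr xi t : 0 < t -> ul < xi < ur -> w_reg ul ur wl wr (xi * t) t = 0.
Proof.
  intros. unfold w_reg. rewrite Heav_neg by nra. rewrite Heav_neg by nra. ring.
Qed.
Lemma reg_5 ul ur wl wr xi t : 0 < t -> ul < ur -> ur < xi -> w_reg ul ur wl wr (xi * t) t = wr.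
Proof.
  intros. unfold w_reg. rewrite Heav_neg by nra. rewrite Heav_pos by nra. ring.
Qed.
Lemma zreg_eq ul ur zl zr x t : z_reg ul ur zl zr x t = w_reg ul ur zl zr x t.
Proof. reflexivity. Qed.

Lemma ueps_lim ul ur e x t : 0 < t -> 0 < e -> u_eps ul ur e x t = u_lim ul ur x t.
Proof.
  intros. unfold u_eps, pw5, u_lim. repeat destruct Rlt_dec; try reflexivity; exfalso; nra.
Qed.

Lemma dbl_int_val F I J : dbl_int F I -> I = J -> dbl_int F J.
Proof. intros H <-; auto. Qed.

Lemma dbl_int_ext F G I : (forall x t, 0 < t -> F x t = G x t) -> dbl_int F I -> dbl_int G I.
Proof.
  intros E [a [b [T1 [T2 [Hab [HT1 [HT12 [Hz [g [Hg Hi]]]]]]]]]].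
  exists a, b, T1, T2. split; auto. split; auto. split; auto. split.
  intros x t Ht H. rewrite <- E by auto. apply Hz; auto.
  exists g. split; auto. intros t Ht.
  replace (fun x => G x t) with (fun x => F x t). apply Hg; auto.
  extensionality x. apply E. lra.
Qed.

Lemma int_pos_of phi phix phit a b T1 T2 s : TF phi phix phit a b T1 T2 ->
  int_pos (fun t => t * phi (s * t) t) (RInt (fun t => t * phi (s * t) t) T1 T2).
Proof.
  intros T.
  pose proof (tf_c _ _ _ _ _ _ _ T) as Cp.
  pose proof (tf_T1 _ _ _ _ _ _ _ T) as HT1.
  pose proof (tf_T12 _ _ _ _ _ _ _ T) as HT12.
  exists T1, T2. split; auto. split; auto. split.
  - intros t Ht H. destruct (tf_supp _ _ _ _ _ _ _ T (s * t) t) as [-> _]. lra. ring.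
  - apply is_to_int_ab. apply (@RInt_correct R_CompleteNormedModule).
    apply (@ex_RInt_continuous R_CompleteNormedModule). intros z _.
    apply cpt_cont. apply (C2_cont2 (fun xi t => t * phi (xi * t) t)). c2.
Qed.

Lemma tends_resid phi phix phit a b T1 T2 ul ur k1 k2 : TF phi phix phit a b T1 T2 ->
  tends (fun e => e * (k1 * Phi phi T1 T2 (ul - e) + k2 * Phi phi T1 T2 (ur + e))) 0.
Proof.
  intros T.
  apply tends_ext with (fun e => k1 * (e * (Phi phi T1 T2 (ul - e) - Phi phi T1 T2 ul))
     + k1 * (e * Phi phi T1 T2 ul) + (k2 * (e * (Phi phi T1 T2 (ur + e) - Phi phi T1 T2 ur))
     + k2 * (e * Phi phi T1 T2 ur))).
  { intros. ring. }
  repeat apply tends_plus; apply tends_scal; try apply tends_e_const; apply tends_emul.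
  eapply der_cont_left. apply (Phi_deriv phi phix phit a b T1 T2 ul T).
  eapply der_cont_right. apply (Phi_deriv phi phix phit a b T1 T2 ur T).
Qed.

Set Bullet Behavior "Strict Subproofs".

Ltac mtac ul ur e :=
  let t := fresh "t" in let xi := fresh "xi" in let Ht := fresh "Ht" in let Hxi := fresh "Hxi" in
  intros t xi Ht Hxi; unfold u_eps, v_eps, w_eps, z_eps;
  first [ rewrite !(pw5_1 ul ur e xi t) by lra
        | rewrite !(pw5_2 ul ur e xi t) by lra
        | rewrite !(pw5_3 ul ur e xi t) by lra
        | rewrite !(pw5_4 ul ur e xi t) by lra
        | rewrite !(pw5_5 ul ur e xi t) by lra ];
  try rewrite !(divt xi t) by lra;
  try (split; reflexivity); try reflexivity.

Ltac rfield := match goal with |- ?x = ?y => change (@eq R x y); field end.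

Ltac side ul ur e HAB :=
  first [ lra | exact HAB | (intros; auto_derive; auto; match goal with |- ?x = ?y => change (@eq R x y); field end) | mtac ul ur e ].

Lemma part_u (ul ur : R) (Hlr : ul < ur) :
  residual_to0 (u_eps ul ur) (fun e x t => u_eps ul ur e x t ^ 2 / 2).
Proof.
  intros phi phix phit Htf Dx Dt.
  destruct (TF_of phi phix phit Htf Dx Dt) as [a [b [T1 [T2 T]]]].
  pose proof (tf_T1 _ _ _ _ _ _ _ T) as HT1.
  pose proof (tf_T12 _ _ _ _ _ _ _ T) as HT12.
  destruct (choose_AB a b T1 T2 (ul - 1) (ur + 1) HT1 HT12) as [A0 [B0 [HA [HB HAB]]]].
  exists (fun _ => 0). split; [|apply tends_const0].
  intros e He.
  eapply dbl_int_val.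
  apply (resid5 phi phix phit a b T1 T2 A0 B0 (u_eps ul ur e)
     (fun x t => u_eps ul ur e x t ^ 2 / 2) (ul - e) ul ur (ur + e)
     (fun _ => ul) (fun _ => 0) (fun _ => ul ^ 2 / 2)
     (fun _ => ul) (fun _ => 0) (fun _ => ul ^ 2 / 2)
     (fun xi => xi) (fun _ => 1) (fun xi => xi ^ 2 / 2)
     (fun _ => ur) (fun _ => 0) (fun _ => ur ^ 2 / 2)
     (fun _ => ur) (fun _ => 0) (fun _ => ur ^ 2 / 2) T).
  all: try side ul ur e HAB.
  unfold W. ring.
Qed.

Ltac resid_start ul ur :=
  intros phi phix phit Htf Dx Dt;
  destruct (TF_of phi phix phit Htf Dx Dt) as [a [b [T1 [T2 T]]]];
  pose proof (tf_T1 _ _ _ _ _ _ _ T) as HT1;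
  pose proof (tf_T12 _ _ _ _ _ _ _ T) as HT12;
  destruct (choose_AB a b T1 T2 (ul - 1) (ur + 1) HT1 HT12) as [A0 [B0 [HA [HB HAB]]]].

Lemma part_v (ul ur vl vr : R) (Hlr : ul < ur) :
  residual_to0 (v_eps ul ur vl vr) (fun e x t => u_eps ul ur e x t * v_eps ul ur vl vr e x t).
Proof.
  resid_start ul ur.
  exists (fun e => e * (vl * Phi phi T1 T2 (ul - e) + vr * Phi phi T1 T2 (ur + e))).
  split; [|apply (tends_resid phi phix phit a b T1 T2 ul ur vl vr T)].
  intros e He.
  eapply dbl_int_val.
  apply (resid5 phi phix phit a b T1 T2 A0 B0 (v_eps ul ur vl vr e)
     (fun x t => u_eps ul ur e x t * v_eps ul ur vl vr e x t) (ul - e) ul ur (ur + e)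
     (fun _ => vl) (fun _ => 0) (fun _ => ul * vl)
     (fun _ => 0) (fun _ => 0) (fun _ => ul * 0)
     (fun _ => 0) (fun _ => 0) (fun xi => xi * 0)
     (fun _ => 0) (fun _ => 0) (fun _ => ur * 0)
     (fun _ => vr) (fun _ => 0) (fun _ => ur * vr) T).
  all: try side ul ur e HAB.
  unfold W. field; lra.
Qed.

Lemma part_w (ul ur vl vr wl wr : R) (Hlr : ul < ur) :
  residual_to0 (w_eps ul ur vl vr wl wr)
    (fun e x t => v_eps ul ur vl vr e x t ^ 2 / 2 + u_eps ul ur e x t * w_eps ul ur vl vr wl wr e x t).
Proof.
  resid_start ul ur.
  exists (fun e => e * (wl * Phi phi T1 T2 (ul - e) + wr * Phi phi T1 T2 (ur + e))).
  split; [|apply (tends_resid phi phix phit a b T1 T2 ul ur wl wr T)].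
  intros e He.
  eapply dbl_int_val.
  apply (resid5 phi phix phit a b T1 T2 A0 B0 (w_eps ul ur vl vr wl wr e)
     (fun x t => v_eps ul ur vl vr e x t ^ 2 / 2 + u_eps ul ur e x t * w_eps ul ur vl vr wl wr e x t)
     (ul - e) ul ur (ur + e)
     (fun _ => wl) (fun _ => 0) (fun _ => vl ^ 2 / 2 + ul * wl)
     (fun _ => vl ^ 2 / (2 * e)) (fun _ => 0) (fun _ => 0 ^ 2 / 2 + ul * (vl ^ 2 / (2 * e)))
     (fun _ => 0) (fun _ => 0) (fun xi => 0 ^ 2 / 2 + xi * 0)
     (fun _ => - (vr ^ 2 / (2 * e))) (fun _ => 0) (fun _ => 0 ^ 2 / 2 + ur * - (vr ^ 2 / (2 * e)))
     (fun _ => wr) (fun _ => 0) (fun _ => vr ^ 2 / 2 + ur * wr) T).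
  all: try side ul ur e HAB.
  unfold W. field; lra.
Qed.

Lemma part_z (ul ur vl vr wl wr zl zr : R) (Hlr : ul < ur) :
  residual_to0 (z_eps ul ur vl vr wl wr zl zr)
    (fun e x t => v_eps ul ur vl vr e x t * w_eps ul ur vl vr wl wr e x t
                  + u_eps ul ur e x t * z_eps ul ur vl vr wl wr zl zr e x t).
Proof.
  resid_start ul ur.
  exists (fun e => e * (zl * Phi phi T1 T2 (ul - e) + zr * Phi phi T1 T2 (ur + e))).
  split; [|apply (tends_resid phi phix phit a b T1 T2 ul ur zl zr T)].
  intros e He.
  eapply dbl_int_val.
  apply (resid5 phi phix phit a b T1 T2 A0 B0 (z_eps ul ur vl vr wl wr zl zr e)
     (fun x t => v_eps ul ur vl vr e x t * w_eps ul ur vl vr wl wr e x t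
                  + u_eps ul ur e x t * z_eps ul ur vl vr wl wr zl zr e x t)
     (ul - e) ul ur (ur + e)
     (fun _ => zl) (fun _ => 0) (fun _ => vl * wl + ul * zl)
     (fun _ => vl * wl / e) (fun _ => 0) (fun _ => 0 * (vl ^ 2 / (2 * e)) + ul * (vl * wl / e))
     (fun _ => 0) (fun _ => 0) (fun xi => 0 * 0 + xi * 0)
     (fun _ => - (vr * wr / e)) (fun _ => 0) (fun _ => 0 * - (vr ^ 2 / (2 * e)) + ur * - (vr * wr / e))
     (fun _ => zr) (fun _ => 0) (fun _ => vr * wr + ur * zr) T).
  all: try side ul ur e HAB.
  unfold W. field; lra.
Qed.

Lemma part_ent (ul ur vl vr wl wr zl zr : R) (Hlr : ul < ur) :
  forall (etab etab' qb : R -> R) (c1 c2 c3 : R),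
     smooth1 etab -> convex etab ->
     (forall s, derivable_pt_lim etab s (etab' s)) ->
     (forall s, derivable_pt_lim qb s (s * etab' s)) ->
     forall phi phix phit,
       test_fun phi -> is_dx phi phix -> is_dt phi phit ->
       (forall x t, 0 <= phi x t) ->
       exists I : R -> R,
         (forall e, 0 < e < 1 ->
            dbl_int (fun x t =>
              (etab (u_eps ul ur e x t) + c1 * v_eps ul ur vl vr e x t
                 + c2 * w_eps ul ur vl vr wl wr e x t + c3 * z_eps ul ur vl vr wl wr zl zr e x t)
                * phit x t
              + (qb (u_eps ul ur e x t) + c1 * (u_eps ul ur e x t * v_eps ul ur vl vr e x t)
                 + c2 * (v_eps ul ur vl vr e x t ^ 2 / 2 + u_eps ul ur e x t * w_eps ul ur vl vr wl wr e x t)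
                 + c3 * (v_eps ul ur vl vr e x t * w_eps ul ur vl vr wl wr e x t
                         + u_eps ul ur e x t * z_eps ul ur vl vr wl wr zl zr e x t))
                * phix x t) (I e)) /\
         liminf_nonneg I.
Proof.
  intros etab etab' qb c1 c2 c3 _ _ De Dq.
  resid_start ul ur. intros _.
  exists (fun e => e * ((c1 * vl + c2 * wl + c3 * zl) * Phi phi T1 T2 (ul - e)
                      + (c1 * vr + c2 * wr + c3 * zr) * Phi phi T1 T2 (ur + e))).
  split; [|apply liminf_of_tends; apply (tends_resid phi phix phit a b T1 T2 ul ur _ _ T)].
  intros e He.
  eapply dbl_int_val.
  apply (resid5 phi phix phit a b T1 T2 A0 B0
     (fun x t => etab (u_eps ul ur e x t) + c1 * v_eps ul ur vl vr e x t
                 + c2 * w_eps ul ur vl vr wl wr e x t + c3 * z_eps ul ur vl vr wl wr zl zr e x t)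
     (fun x t => qb (u_eps ul ur e x t) + c1 * (u_eps ul ur e x t * v_eps ul ur vl vr e x t)
                 + c2 * (v_eps ul ur vl vr e x t ^ 2 / 2 + u_eps ul ur e x t * w_eps ul ur vl vr wl wr e x t)
                 + c3 * (v_eps ul ur vl vr e x t * w_eps ul ur vl vr wl wr e x t
                         + u_eps ul ur e x t * z_eps ul ur vl vr wl wr zl zr e x t))
     (ul - e) ul ur (ur + e)
     (fun _ => etab ul + c1 * vl + c2 * wl + c3 * zl) (fun _ => 0)
     (fun _ => qb ul + c1 * (ul * vl) + c2 * (vl ^ 2 / 2 + ul * wl) + c3 * (vl * wl + ul * zl))
     (fun _ => etab ul + c1 * 0 + c2 * (vl ^ 2 / (2 * e)) + c3 * (vl * wl / e)) (fun _ => 0)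
     (fun _ => qb ul + c1 * (ul * 0) + c2 * (0 ^ 2 / 2 + ul * (vl ^ 2 / (2 * e)))
               + c3 * (0 * (vl ^ 2 / (2 * e)) + ul * (vl * wl / e)))
     (fun xi => etab xi + c1 * 0 + c2 * 0 + c3 * 0) etab'
     (fun xi => qb xi + c1 * (xi * 0) + c2 * (0 ^ 2 / 2 + xi * 0) + c3 * (0 * 0 + xi * 0))
     (fun _ => etab ur + c1 * 0 + c2 * - (vr ^ 2 / (2 * e)) + c3 * - (vr * wr / e)) (fun _ => 0)
     (fun _ => qb ur + c1 * (ur * 0) + c2 * (0 ^ 2 / 2 + ur * - (vr ^ 2 / (2 * e)))
               + c3 * (0 * - (vr ^ 2 / (2 * e)) + ur * - (vr * wr / e)))
     (fun _ => etab ur + c1 * vr + c2 * wr + c3 * zr) (fun _ => 0)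
     (fun _ => qb ur + c1 * (ur * vr) + c2 * (vr ^ 2 / 2 + ur * wr) + c3 * (vr * wr + ur * zr))
     T).
  all: try (intros; apply D_const).
  all: try (intros; apply D_eq with 0; [rfield | apply D_const]).
  all: try (intros; apply (is_derive_ext etab); [intros; rfield | apply is_derive_Reals; auto]).
  all: try (intros; apply (is_derive_ext qb); [intros; rfield | apply is_derive_Reals; auto]).
  all: try side ul ur e HAB.
  unfold W. field; lra.
Qed.

Lemma TF_of' phi : test_fun phi ->
  exists phix phit a b T1 T2, TF phi phix phit a b T1 T2.
Proof.
  intros Htf. pose proof Htf as [Hs _]. destruct Hs as [fx ft _ Dx Dt _ _].
  destruct (TF_of phi fx ft Htf Dx Dt) as [a [b [T1 [T2 T]]]].
  exists fx, ft, a, b, T1, T2. exact T.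
Qed.

Lemma tends_constL L : tends (fun _ => L) L.
Proof. intros eta Heta. exists 1. split. lra. intros. rewrite Rminus_diag, Rabs_R0. auto. Qed.

Ltac ctac := intros; first [ apply continuity_pt_const; intros ? ?; reflexivity
                           | apply continuity_pt_id ].

Ltac dmatch ul ur e :=
  let t := fresh "t" in let xi := fresh "xi" in let Ht := fresh "Ht" in let Hxi := fresh "Hxi" in
  intros t xi Ht Hxi;
  first [ (exfalso; lra)
        | (rewrite ulim_1 by lra; reflexivity)
        | (rewrite ulim_3 by lra; reflexivity)
        | (rewrite ulim_5 by lra; reflexivity)
        | (rewrite vlim_1 by lra; reflexivity)
        | (rewrite vlim_3 by lra; reflexivity)
        | (rewrite vlim_5 by lra; reflexivity)
        | (try rewrite zreg_eq; rewrite reg_1 by lra; reflexivity)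
        | (try rewrite zreg_eq; rewrite reg_3 by lra; reflexivity)
        | (try rewrite zreg_eq; rewrite reg_5 by lra; reflexivity)
        | (unfold v_eps, w_eps, z_eps;
           first [ rewrite !(pw5_1 ul ur e xi t) by lra
                 | rewrite !(pw5_2 ul ur e xi t) by lra
                 | rewrite !(pw5_3 ul ur e xi t) by lra
                 | rewrite !(pw5_4 ul ur e xi t) by lra
                 | rewrite !(pw5_5 ul ur e xi t) by lra ]; reflexivity) ].

Ltac dstart ul ur :=
  intros phi Htf;
  destruct (TF_of' phi Htf) as [phix [phit [a [b [T1 [T2 T]]]]]];
  pose proof (tf_T1 _ _ _ _ _ _ _ T) as HT1;
  pose proof (tf_T12 _ _ _ _ _ _ _ T) as HT12;
  destruct (choose_AB a b T1 T2 (ul - 1) (ur + 1) HT1 HT12) as [A0 [B0 [HA [HB HAB]]]].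

Lemma part_du (ul ur : R) (Hlr : ul < ur) : dconv (u_eps ul ur) (fun_pair (u_lim ul ur)).
Proof.
  dstart ul ur.
  assert (H : dbl_int (fun x t => u_lim ul ur x t * phi x t)
    (NG phi T1 T2 (fun _ => ul) A0 ul + NG phi T1 T2 (fun _ => 0) ul ul
     + NG phi T1 T2 (fun xi => xi) ul ur + NG phi T1 T2 (fun _ => 0) ur ur
     + NG phi T1 T2 (fun _ => ur) ur B0)).
  { apply (dens5 phi phix phit a b T1 T2 A0 B0 (u_lim ul ur) ul ul ur ur); auto; try lra.
    all: try ctac.
    all: dmatch ul ur 0. }
  eexists; eexists; split; [|split; [exact H|apply tends_constL]].
  intros e He. apply (dbl_int_ext (fun x t => u_lim ul ur x t * phi x t)); auto.
  intros x t Ht. rewrite ueps_lim by lra. reflexivity.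
Qed.

Lemma part_dv (ul ur vl vr : R) (Hlr : ul < ur) :
  dconv (v_eps ul ur vl vr) (fun_pair (v_lim ul ur vl vr)).
Proof.
  dstart ul ur.
  exists (fun e => NG phi T1 T2 (fun _ => vl) A0 (ul - e) + NG phi T1 T2 (fun _ => 0) (ul - e) ul
     + NG phi T1 T2 (fun _ => 0) ul ur + NG phi T1 T2 (fun _ => 0) ur (ur + e)
     + NG phi T1 T2 (fun _ => vr) (ur + e) B0).
  exists (NG phi T1 T2 (fun _ => vl) A0 ul + NG phi T1 T2 (fun _ => 0) ul ul
     + NG phi T1 T2 (fun _ => 0) ul ur + NG phi T1 T2 (fun _ => 0) ur ur
     + NG phi T1 T2 (fun _ => vr) ur B0).
  split; [|split].
  - intros e He.
    apply (dens5 phi phix phit a b T1 T2 A0 B0 (v_eps ul ur vl vr e) (ul - e) ul ur (ur + e)); auto; try lra.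
    all: try ctac.
    all: dmatch ul ur e.
  - apply (dens5 phi phix phit a b T1 T2 A0 B0 (v_lim ul ur vl vr) ul ul ur ur); auto; try lra.
    all: try ctac.
    all: dmatch ul ur 0.
  - apply tends_of0.
    apply tends_ext with (fun e => vl * (Psi phi T1 T2 A0 (ul - e) - Psi phi T1 T2 A0 ul)
                                 + (- vr) * (Psi phi T1 T2 A0 (ur + e) - Psi phi T1 T2 A0 ur)).
    { intros e He. rewrite !(NG_const phi phix phit a b T1 T2 A0 _ _ _ T). ring. }
    apply tends_plus; apply tends_scal.
    eapply der_cont_left. apply (Psi_deriv phi phix phit a b T1 T2 A0 ul T).
    eapply der_cont_right. apply (Psi_deriv phi phix phit a b T1 T2 A0 ur T).
Qed.

Lemma part_dw (ul ur vl vr wl wr : R) (Hlr : ul < ur) :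
  dconv (w_eps ul ur vl vr wl wr) (fun_delta_pair (w_reg ul ur wl wr)
             (vl ^ 2 / 2) ul (- (vr ^ 2 / 2)) ur).
Proof.
  dstart ul ur.
  exists (fun e => NG phi T1 T2 (fun _ => wl) A0 (ul - e)
     + NG phi T1 T2 (fun _ => vl ^ 2 / (2 * e)) (ul - e) ul
     + NG phi T1 T2 (fun _ => 0) ul ur
     + NG phi T1 T2 (fun _ => - (vr ^ 2 / (2 * e))) ur (ur + e)
     + NG phi T1 T2 (fun _ => wr) (ur + e) B0).
  set (A := NG phi T1 T2 (fun _ => wl) A0 ul + NG phi T1 T2 (fun _ => 0) ul ul
     + NG phi T1 T2 (fun _ => 0) ul ur + NG phi T1 T2 (fun _ => 0) ur ur
     + NG phi T1 T2 (fun _ => wr) ur B0).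
  set (B := RInt (fun t => t * phi (ul * t) t) T1 T2).
  set (C := RInt (fun t => t * phi (ur * t) t) T1 T2).
  exists (A + vl ^ 2 / 2 * B + - (vr ^ 2 / 2) * C).
  split; [|split].
  - intros e He.
    apply (dens5 phi phix phit a b T1 T2 A0 B0 (w_eps ul ur vl vr wl wr e) (ul - e) ul ur (ur + e)); auto; try lra.
    all: try ctac.
    all: dmatch ul ur e.
  - exists A, B, C. split; [|split; [|split]].
    + apply (dens5 phi phix phit a b T1 T2 A0 B0 (w_reg ul ur wl wr) ul ul ur ur); auto; try lra.
      all: try ctac.
      all: dmatch ul ur 0.
    + apply (int_pos_of phi phix phit a b T1 T2 ul T).
    + apply (int_pos_of phi phix phit a b T1 T2 ur T).
    + reflexivity.
  - apply tends_of0.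
    apply tends_ext with (fun e =>
        wl * (Psi phi T1 T2 A0 (ul - e) - Psi phi T1 T2 A0 ul)
      + (- wr) * (Psi phi T1 T2 A0 (ur + e) - Psi phi T1 T2 A0 ur)
      + vl ^ 2 / 2 * ((Psi phi T1 T2 A0 ul - Psi phi T1 T2 A0 (ul - e)) / e - B)
      + (- (vr ^ 2 / 2)) * ((Psi phi T1 T2 A0 (ur + e) - Psi phi T1 T2 A0 ur) / e - C)).
    { intros e He. unfold A. rewrite !(NG_const phi phix phit a b T1 T2 A0 _ _ _ T). field. lra. }
    repeat apply tends_plus; apply tends_scal.
    eapply der_cont_left. apply (Psi_deriv phi phix phit a b T1 T2 A0 ul T).
    eapply der_cont_right. apply (Psi_deriv phi phix phit a b T1 T2 A0 ur T).
    apply der_left. apply (Psi_deriv phi phix phit a b T1 T2 A0 ul T).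
    apply der_right. apply (Psi_deriv phi phix phit a b T1 T2 A0 ur T).
Qed.

Lemma part_dz (ul ur vl vr wl wr zl zr : R) (Hlr : ul < ur) :
  dconv (z_eps ul ur vl vr wl wr zl zr) (fun_delta_pair (z_reg ul ur zl zr)
             (vl * wl) ul (- (vr * wr)) ur).
Proof.
  dstart ul ur.
  exists (fun e => NG phi T1 T2 (fun _ => zl) A0 (ul - e)
     + NG phi T1 T2 (fun _ => vl * wl / e) (ul - e) ul
     + NG phi T1 T2 (fun _ => 0) ul ur
     + NG phi T1 T2 (fun _ => - (vr * wr / e)) ur (ur + e)
     + NG phi T1 T2 (fun _ => zr) (ur + e) B0).
  set (A := NG phi T1 T2 (fun _ => zl) A0 ul + NG phi T1 T2 (fun _ => 0) ul ul
     + NG phi T1 T2 (fun _ => 0) ul ur + NG phi T1 T2 (fun _ => 0) ur ur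
     + NG phi T1 T2 (fun _ => zr) ur B0).
  set (B := RInt (fun t => t * phi (ul * t) t) T1 T2).
  set (C := RInt (fun t => t * phi (ur * t) t) T1 T2).
  exists (A + vl * wl * B + - (vr * wr) * C).
  split; [|split].
  - intros e He.
    apply (dens5 phi phix phit a b T1 T2 A0 B0 (z_eps ul ur vl vr wl wr zl zr e) (ul - e) ul ur (ur + e)); auto; try lra.
    all: try ctac.
    all: dmatch ul ur e.
  - exists A, B, C. split; [|split; [|split]].
    + apply (dens5 phi phix phit a b T1 T2 A0 B0 (z_reg ul ur zl zr) ul ul ur ur); auto; try lra.
      all: try ctac.
      all: dmatch ul ur 0.
    + apply (int_pos_of phi phix phit a b T1 T2 ul T).
    + apply (int_pos_of phi phix phit a b T1 T2 ur T).
    + reflexivity.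
  - apply tends_of0.
    apply tends_ext with (fun e =>
        zl * (Psi phi T1 T2 A0 (ul - e) - Psi phi T1 T2 A0 ul)
      + (- zr) * (Psi phi T1 T2 A0 (ur + e) - Psi phi T1 T2 A0 ur)
      + vl * wl * ((Psi phi T1 T2 A0 ul - Psi phi T1 T2 A0 (ul - e)) / e - B)
      + (- (vr * wr)) * ((Psi phi T1 T2 A0 (ur + e) - Psi phi T1 T2 A0 ur) / e - C)).
    { intros e He. unfold A. rewrite !(NG_const phi phix phit a b T1 T2 A0 _ _ _ T). field. lra. }
    repeat apply tends_plus; apply tends_scal.
    eapply der_cont_left. apply (Psi_deriv phi phix phit a b T1 T2 A0 ul T).
    eapply der_cont_right. apply (Psi_deriv phi phix phit a b T1 T2 A0 ur T).
    apply der_left. apply (Psi_deriv phi phix phit a b T1 T2 A0 ul T).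
    apply der_right. apply (Psi_deriv phi phix phit a b T1 T2 A0 ur T).
Qed.

Lemma part_il (ul ur vl vr wl wr zl zr : R) :
  forall e x, 0 < e < 1 -> x < 0 -> exists t0, 0 < t0 /\
     forall t, 0 < t < t0 ->
       u_eps ul ur e x t = ul /\ v_eps ul ur vl vr e x t = vl /\
       w_eps ul ur vl vr wl wr e x t = wl /\ z_eps ul ur vl vr wl wr zl zr e x t = zl.
Proof.
  intros e x He Hx. pose proof (Rabs_pos (ul - e)).
  exists (- x / (Rabs (ul - e) + 1)). split.
  apply Rdiv_lt_0_compat; lra.
  intros t Ht.
  assert (H1 : (Rabs (ul - e) + 1) * t < - x).
  { apply Rlt_le_trans with ((Rabs (ul - e) + 1) * (- x / (Rabs (ul - e) + 1))).
    apply Rmult_lt_compat_l; lra. right; field; lra. }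
  pose proof (Rabs_maj2 (ul - e)).
  assert (H3 : x < (ul - e) * t) by nra.
  unfold u_eps, v_eps, w_eps, z_eps, pw5.
  destruct (Rlt_dec x ((ul - e) * t)); [repeat split | contradiction].
Qed.

Lemma part_ir (ul ur vl vr wl wr zl zr : R) (Hlr : ul < ur) :
  forall e x, 0 < e < 1 -> 0 < x -> exists t0, 0 < t0 /\
     forall t, 0 < t < t0 ->
       u_eps ul ur e x t = ur /\ v_eps ul ur vl vr e x t = vr /\
       w_eps ul ur vl vr wl wr e x t = wr /\ z_eps ul ur vl vr wl wr zl zr e x t = zr.
Proof.
  intros e x He Hx. pose proof (Rabs_pos ul). pose proof (Rabs_pos ur).
  exists (x / (Rabs ul + Rabs ur + 2)). split.
  apply Rdiv_lt_0_compat; lra.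
  intros t Ht.
  assert (H1 : (Rabs ul + Rabs ur + 2) * t < x).
  { apply Rlt_le_trans with ((Rabs ul + Rabs ur + 2) * (x / (Rabs ul + Rabs ur + 2))).
    apply Rmult_lt_compat_l; lra. right; field; lra. }
  pose proof (Rle_abs ul). pose proof (Rle_abs ur).
  assert (Ha : (ul - e) * t <= (Rabs ul + Rabs ur + 1) * t) by (apply Rmult_le_compat_r; lra).
  assert (Hb : ul * t <= (Rabs ul + Rabs ur + 1) * t) by (apply Rmult_le_compat_r; lra).
  assert (Hc : ur * t <= (Rabs ul + Rabs ur + 1) * t) by (apply Rmult_le_compat_r; lra).
  assert (Hd : (ur + e) * t <= (Rabs ul + Rabs ur + 1) * t) by (apply Rmult_le_compat_r; lra).
  unfold u_eps, v_eps, w_eps, z_eps, pw5.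
  repeat destruct Rlt_dec; try (exfalso; lra). repeat split.
Qed.

Theorem theorem5p3 (ul ur vl vr wl wr zl zr : R) (Hlr : ul < ur) :
  let u := u_eps ul ur in
  let v := v_eps ul ur vl vr in
  let w := w_eps ul ur vl vr wl wr in
  let z := z_eps ul ur vl vr wl wr zl zr in
  (* the approximations take the Riemann data near t = 0 *)
  (forall e x, 0 < e < 1 -> x < 0 -> exists t0, 0 < t0 /\
     forall t, 0 < t < t0 ->
       u e x t = ul /\ v e x t = vl /\ w e x t = wl /\ z e x t = zl) /\
  (forall e x, 0 < e < 1 -> 0 < x -> exists t0, 0 < t0 /\
     forall t, 0 < t < t0 ->
       u e x t = ur /\ v e x t = vr /\ w e x t = wr /\ z e x t = zr) /\
  (* the system is satisfied in the limit in D'(R x (0,oo)) *)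
  residual_to0 u (fun e x t => u e x t ^ 2 / 2) /\
  residual_to0 v (fun e x t => u e x t * v e x t) /\
  residual_to0 w (fun e x t => v e x t ^ 2 / 2 + u e x t * w e x t) /\
  residual_to0 z (fun e x t => v e x t * w e x t + u e x t * z e x t) /\
  (* U^eps -> (u,v,w,z) in D'(R x (0,oo)) *)
  dconv u (fun_pair (u_lim ul ur)) /\
  dconv v (fun_pair (v_lim ul ur vl vr)) /\
  dconv w (fun_delta_pair (w_reg ul ur wl wr)
             (vl ^ 2 / 2) ul (- (vr ^ 2 / 2)) ur) /\
  dconv z (fun_delta_pair (z_reg ul ur zl zr)
             (vl * wl) ul (- (vr * wr)) ur) /\
  (* entropy admissibility *)
  (forall (etab etab' qb : R -> R) (c1 c2 c3 : R),
     smooth1 etab -> convex etab ->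
     (forall s, derivable_pt_lim etab s (etab' s)) ->
     (forall s, derivable_pt_lim qb s (s * etab' s)) ->
     forall phi phix phit,
       test_fun phi -> is_dx phi phix -> is_dt phi phit ->
       (forall x t, 0 <= phi x t) ->
       exists I : R -> R,
         (forall e, 0 < e < 1 ->
            dbl_int (fun x t =>
              (etab (u e x t) + c1 * v e x t + c2 * w e x t + c3 * z e x t)
                * phit x t
              + (qb (u e x t) + c1 * (u e x t * v e x t)
                 + c2 * (v e x t ^ 2 / 2 + u e x t * w e x t)
                 + c3 * (v e x t * w e x t + u e x t * z e x t))
                * phix x t) (I e)) /\
         liminf_nonneg I).
Proof.
  cbv zeta.
  split; [apply part_il|].
  split; [apply part_ir; exact Hlr|].
  split; [apply part_u; exact Hlr|].
  split; [apply part_v; exact Hlr|].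
  split; [apply part_w; exact Hlr|].
  split; [apply part_z; exact Hlr|].
  split; [apply part_du; exact Hlr|].
  split; [apply part_dv; exact Hlr|].
  split; [apply part_dw; exact Hlr|].
  split; [apply part_dz; exact Hlr|].
  apply part_ent; exact Hlr.
Qed.
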